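(* Let $\Gamma\subseteq A$ be $\Bbbk$-algebras, $\sim$ an equivalence relation on $\mathrm{cfs}(\Gamma)$, and suppose $\Gamma$ is a strong Harish-Chandra block subalgebra of $A$ with respect to $\sim$. Let $F$ be a profinite $\mathcal A$-module. Then for $a\in A$ and $v\in F(B)$, the element $F_{B,C}((a))v$ is nonzero for only finitely many $C$, and $\mathcal H(F):=\bigoplus_{B}F(B)$ with the action $a.v:=\sum_CF_{B,C}((a))v$ (for $v\in F(B)$) is a Harish-Chandra block module. Furthermore, if $F$ is a discrete $\mathcal A$-module, then $\mathcal H(F)$ is a strong Harish-Chandra block module.
   Context: $\mathrm{cfs}(\Gamma)$: maximal two-sided ideals $\mathfrak m$ with $\dim\Gamma/\mathfrak m<\infty$. For a class $B$, $\mathcal W(B)=\{\mathfrak m_1\cdots\mathfrak m_k:k\ge0,\mathfrak m_i\in B\}$. For a left $\Gamma$-module $V$, $V(B)=\{v:\mathfrak mv=0$ for some $\mathfrak m\in\mathcal W(B)\}$ (right modules analogously); block module: $V=\bigoplus_BV(B)$; strong block module: additionally each $V(B)$ is killed by some $\mathfrak m\in\mathcal W(B)$. A (strong) Harish-Chandra block module is an $A$-module that is a (strong) block module over $\Gamma$. $\Gamma$ is a strong Harish-Chandra block subalgebra if for all $B$, $\mathfrak m\in\mathcal W(B)$, the left module $A/A\mathfrak m$ and the right module $A/\mathfrak mA$ are strong block modules. $\mathcal A$ is the category with objects $\mathrm{cfs}(\Gamma)/{\sim}$, morphisms $\mathcal A(B,C)=\varprojlim_{\mathfrak n\in\mathcal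 W(C),\mathfrak m\in\mathcal W(B)}A/(\mathfrak nA+A\mathfrak m)$, and composition defined by: for $\mathfrak m\in\mathcal W(B)$, $\mathfrak l\in\mathcal W(D)$ choose $\mathfrak n\in\mathcal W(C)$ with $A/(\mathfrak lA+A\mathfrak n)\cong(A/\mathfrak lA)(C)$ and $A/(\mathfrak nA+A\mathfrak m)\cong(A/A\mathfrak m)(C)$ naturally; pick representatives $a_0$ of $\alpha_{\mathfrak m,\mathfrak n}$ with $a_0+A\mathfrak m\in(A/A\mathfrak m)(C)$ and $b_0$ of $\beta_{\mathfrak n,\mathfrak l}$ with $b_0+\mathfrak lA\in(A/\mathfrak lA)(C)$; set $(\beta\circ\alpha)_{\mathfrak m,\mathfrak l}=b_0a_0+\mathfrak lA+A\mathfrak m$. $(a)$ denotes the image of $a\in A$ in $\mathcal A(B,C)$. $\mathcal A(B,C)$ carries the inverse limit topology of the discrete quotients; $\mathrm{Hom}_\Bbbk(V,W)$ carries either the discrete topology or the limit topology $\varprojlim_U\mathrm{Hom}_\Bbbk(U,W)$ over finite-dimensional $U\le V$ (each factor discrete). A profinite (resp. discrete) $\mathcal A$-module is a functor $F:\mathcal A\to\mathbf{Vect}_\Bbbk$ with each $F_{B,C}$ a continuous linear map for the limit (resp. discrete) topology. *)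

(* Defs.v *)
From HB Require Import structures.
From mathcomp Require Import all_boot all_algebra.
From mathcomp Require Import boolp classical_sets.
From Stdlib Require List.
Set Implicit Arguments.
Unset Strict Implicit.
Unset Printing Implicit Defensive.
Import GRing.Theory.
Local Open Scope ring_scope.
Local Open Scope classical_set_scope.

Section DFun.
Variables (k : fieldType) (I : Type) (Fo : I -> lmodType k).

Definition dfun := forall i, Fo i.
HB.instance Definition _ := Choice.on dfun.

Definition dfun0 : dfun := fun i => 0.
Definition dfunN (f : dfun) : dfun := fun i => - f i.
Definition dfunD (f g : dfun) : dfun := fun i => f i + g i.
Definition dfunZ (c : k) (f : dfun) : dfun := fun i => c *: f i.

Lemma dfunDA : associative dfunD.
Proof. by move=> f g h; apply: functional_extensionality_dep => i; rewrite /dfunD addrA. Qed.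
Lemma dfunDC : commutative dfunD.
Proof. by move=> f g; apply: functional_extensionality_dep => i; rewrite /dfunD addrC. Qed.
Lemma dfun0D : left_id dfun0 dfunD.
Proof. by move=> f; apply: functional_extensionality_dep => i; rewrite /dfunD /dfun0 add0r. Qed.
Lemma dfunND : left_inverse dfun0 dfunN dfunD.
Proof. by move=> f; apply: functional_extensionality_dep => i; rewrite /dfunD /dfunN /dfun0 addNr. Qed.
HB.instance Definition _ := GRing.isZmodule.Build dfun dfunDA dfunDC dfun0D dfunND.

Lemma dfunZA a b (f : dfun) : dfunZ a (dfunZ b f) = dfunZ (a * b) f.
Proof. by apply: functional_extensionality_dep => i; rewrite /dfunZ scalerA. Qed.
Lemma dfunZ1 : left_id 1 dfunZ.
Proof. by move=> f; apply: functional_extensionality_dep => i; rewrite /dfunZ scale1r. Qed.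
Lemma dfunZDr : right_distributive dfunZ +%R.
Proof. by move=> a f g; apply: functional_extensionality_dep => i; rewrite /dfunZ /= /dfunD scalerDr. Qed.
Lemma dfunZDl (f : dfun) : {morph dfunZ^~ f : a b / a + b}.
Proof. by move=> a b; apply: functional_extensionality_dep => i; rewrite /dfunZ /= /dfunD scalerDl. Qed.
HB.instance Definition _ :=
  GRing.Zmodule_isLmodule.Build k dfun dfunZA dfunZ1 dfunZDr dfunZDl.
End DFun.

Section Alg.
Variables (k : fieldType) (A : algType k).

Definition subalgebra (G : set A) : Prop :=
  [/\ G 1, (forall x y, G x -> G y -> G (x + y)),
      (forall x y, G x -> G y -> G (x * y)) &
      (forall (c : k) x, G x -> G (c *: x))].

Definition ideal2 (G I : set A) : Prop :=
  [/\ I `<=` G, I 0, (forall x y, I x -> I y -> I (x + y)),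
      (forall (c : k) x, I x -> I (c *: x)) &
      (forall g x, G g -> I x -> I (g * x) /\ I (x * g))].

Definition max_ideal2 (G I : set A) : Prop :=
  [/\ ideal2 G I, (exists g, G g /\ ~ I g) &
      (forall J, ideal2 G J -> I `<=` J -> J = I \/ J = G)].

Definition fin_codim (G I : set A) : Prop :=
  exists (n : nat) (e : 'I_n -> A), (forall i, G (e i)) /\
    forall g, G g -> exists c : 'I_n -> k, I (g - \sum_(i < n) c i *: e i).

Definition cfs (G : set A) (m : set A) : Prop := max_ideal2 G m /\ fin_codim G m.

Definition equiv_on_cfs (G : set A) (sim : set A -> set A -> Prop) : Prop :=
  [/\ (forall m, cfs G m -> sim m m),
      (forall m n, cfs G m -> cfs G n -> sim m n -> sim n m) &
      (forall m n l, cfs G m -> cfs G n -> cfs G l -> sim m n -> sim n l -> sim m l)].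

Definition is_class (G : set A) (sim : set A -> set A -> Prop) (B : set (set A)) : Prop :=
  exists m, cfs G m /\ B = [set n | cfs G n /\ sim m n].

Definition idealMul (I J : set A) : set A :=
  [set x | exists (n : nat) (u v : 'I_n -> A),
     [/\ (forall i, I (u i)), (forall i, J (v i)) & x = \sum_(i < n) u i * v i]].

(* W(B) = { m_1 ... m_k : k >= 0, m_i in B }  (empty product = Gamma) *)
Definition Wset (G : set A) (B : set (set A)) (m : set A) : Prop :=
  exists s : seq (set A), List.Forall B s /\ m = foldr idealMul G s.

(* m A  (right ideal of A generated by m) and  A m  (left ideal) *)
Definition lmulS (m : set A) : set A :=
  [set x | exists (n : nat) (u w : 'I_n -> A),
     (forall i, m (u i)) /\ x = \sum_(i < n) u i * w i].
Definition rmulS (m : set A) : set A :=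
  [set x | exists (n : nat) (u w : 'I_n -> A),
     (forall i, m (u i)) /\ x = \sum_(i < n) w i * u i].

Definition nAAm (n m : set A) : set A :=
  [set x | exists y z, [/\ lmulS n y, rmulS m z & x = y + z]].

(* Block modules.  A (left or right) Gamma-module is given by a k-vector      *)
(* space V with an action act : A -> V -> V (only g in Gamma is used here),   *)
(* considered on a subspace D of V and modulo a subspace N of V (so that the *)
(* quotient modules A/Am and A/mA and the direct sum H(F) are all covered).  *)
Variables (G : set A) (sim : set A -> set A -> Prop).

Definition bpart (V : lmodType k) (D N : set V) (act : A -> V -> V)
    (B : set (set A)) (v : V) : Prop :=
  D v /\ exists m, Wset G B m /\ forall g, m g -> N (act g v).

Definition block_mod (V : lmodType k) (D N : set V) (act : A -> V -> V) : Prop :=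
  (forall v, D v -> exists (n : nat) (Bs : 'I_n -> set (set A)) (vs : 'I_n -> V),
     [/\ (forall i, is_class G sim (Bs i)), injective Bs,
         (forall i, bpart D N act (Bs i) (vs i)) &
         N (v - \sum_(i < n) vs i)]) /\
  (forall (n : nat) (Bs : 'I_n -> set (set A)) (vs : 'I_n -> V),
     (forall i, is_class G sim (Bs i)) -> injective Bs ->
     (forall i, bpart D N act (Bs i) (vs i)) ->
     N (\sum_(i < n) vs i) -> forall i, N (vs i)).

Definition strong_block_mod (V : lmodType k) (D N : set V) (act : A -> V -> V) : Prop :=
  block_mod D N act /\
  forall B, is_class G sim B -> exists m, Wset G B m /\
    forall v, bpart D N act B v -> forall g, m g -> N (act g v).

Definition strong_HC_block_subalg : Prop :=
  forall B m, is_class G sim B -> Wset G B m ->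
    strong_block_mod (V := A) setT (rmulS m) (fun g x => g * x) /\
    strong_block_mod (V := A) setT (lmulS m) (fun g x => x * g).

Definition is_Amod (V : lmodType k) (D : set V) (act : A -> V -> V) : Prop :=
  [/\ (forall a v, D v -> D (act a v)),
      (forall a (c : k) v w, D v -> D w -> act a (c *: v + w) = c *: act a v + act a w),
      (forall a b (c : k) v, D v -> act (c *: a + b) v = c *: act a v + act b v),
      (forall v, D v -> act 1 v = v) &
      (forall a b v, D v -> act (a * b) v = act a (act b v))].

Definition HC_block_mod (V : lmodType k) (D : set V) (act : A -> V -> V) : Prop :=
  is_Amod D act /\ block_mod D (fun v => v = 0) act.
Definition strong_HC_block_mod (V : lmodType k) (D : set V) (act : A -> V -> V) : Prop :=
  is_Amod D act /\ strong_block_mod D (fun v => v = 0) act.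

(* The category  cA.  A morphism alpha in cA(B,C) is represented by a family *)
(* of representatives alpha m n in A of alpha_{m,n} in A/(nA + Am),          *)
(* m in W(B), n in W(C), compatible under the projections of the system.     *)
Definition mor := set A -> set A -> A.

Definition isMor (B C : set (set A)) (al : mor) : Prop :=
  forall m n m' n', Wset G B m -> Wset G C n -> Wset G B m' -> Wset G C n' ->
    m' `<=` m -> n' `<=` n -> nAAm n m (al m' n' - al m n).

(* equality in the inverse limit *)
Definition morEq (B C : set (set A)) (al be : mor) : Prop :=
  forall m n, Wset G B m -> Wset G C n -> nAAm n m (al m n - be m n).

Definition img (a : A) : mor := fun _ _ => a.

Definition partL (C : set (set A)) (m : set A) (x : A) : Prop :=
  bpart (V := A) setT (rmulS m) (fun g y => g * y) C x.
Definition partR (C : set (set A)) (l : set A) (x : A) : Prop :=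
  bpart (V := A) setT (lmulS l) (fun g y => y * g) C x.

Definition comp_rel (B C D : set (set A)) (al be ga : mor) : Prop :=
  forall m l, Wset G B m -> Wset G D l -> exists n, Wset G C n /\
    (* the natural map (A/lA)(C) -> A/(lA + An) is bijective *)
    (forall x, partR C l x -> nAAm l n x -> lmulS l x) /\
    (forall y, exists x, partR C l x /\ nAAm l n (y - x)) /\
    (* the natural map (A/Am)(C) -> A/(nA + Am) is bijective *)
    (forall x, partL C m x -> nAAm n m x -> rmulS m x) /\
    (forall y, exists x, partL C m x /\ nAAm n m (y - x)) /\
    forall a0 b0,
      nAAm n m (a0 - al m n) -> partL C m a0 ->
      nAAm l n (b0 - be n l) -> partR C l b0 ->
      nAAm l m (ga m l - b0 * a0).

Definition is_Amodule_functor (Fo : set (set A) -> lmodType k)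
    (Fm : forall B C, mor -> Fo B -> Fo C) : Prop :=
  [/\
      (forall B C al, is_class G sim B -> is_class G sim C -> isMor B C al ->
         forall (c : k) u v, Fm B C al (c *: u + v) = c *: Fm B C al u + Fm B C al v),
      (forall B C al be (c : k), is_class G sim B -> is_class G sim C ->
         isMor B C al -> isMor B C be ->
         forall v, Fm B C (fun m n => c *: al m n + be m n) v
                   = c *: Fm B C al v + Fm B C be v),
      (forall B C al be, is_class G sim B -> is_class G sim C ->
         isMor B C al -> isMor B C be -> morEq B C al be ->
         forall v, Fm B C al v = Fm B C be v),
      (forall B v, is_class G sim B -> Fm B B (img 1) v = v) &
      (forall B C D al be ga, is_class G sim B -> is_class G sim C -> is_class G sim D ->
         isMor B C al -> isMor C D be -> isMor B D ga -> comp_rel B C D al be ga ->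
         forall v, Fm B D ga v = Fm C D be (Fm B C al v))].

(* continuity for the limit topology on Hom_k(F(B),F(C)) *)
Definition profinite_module (Fo : set (set A) -> lmodType k)
    (Fm : forall B C, mor -> Fo B -> Fo C) : Prop :=
  is_Amodule_functor Fm /\
  forall B C al, is_class G sim B -> is_class G sim C -> isMor B C al ->
    forall (r : nat) (vs : 'I_r -> Fo B),
    exists s : seq (set A * set A),
      (forall p, List.In p s -> Wset G B p.1 /\ Wset G C p.2) /\
      forall be, isMor B C be ->
        (forall p, List.In p s -> nAAm p.2 p.1 (be p.1 p.2 - al p.1 p.2)) ->
        forall i, Fm B C be (vs i) = Fm B C al (vs i).

(* continuity for the discrete topology on Hom_k(F(B),F(C)) *)
Definition discrete_module (Fo : set (set A) -> lmodType k)
    (Fm : forall B C, mor -> Fo B -> Fo C) : Prop :=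
  is_Amodule_functor Fm /\
  forall B C al, is_class G sim B -> is_class G sim C -> isMor B C al ->
    exists s : seq (set A * set A),
      (forall p, List.In p s -> Wset G B p.1 /\ Wset G C p.2) /\
      forall be, isMor B C be ->
        (forall p, List.In p s -> nAAm p.2 p.1 (be p.1 p.2 - al p.1 p.2)) ->
        forall v, Fm B C be v = Fm B C al v.

(* the carrier of H(F) = (+)_B F(B) inside prod_B F(B) *)
Definition HF_carrier (Fo : set (set A) -> lmodType k) : set (dfun Fo) :=
  [set f | (forall B, ~ is_class G sim B -> f B = 0) /\
           exists s : seq (set (set A)), forall B, ~ List.In B s -> f B = 0].

End Alg.

(* Main.v *)
Require Import Defs.
From HB Require Import structures.
From mathcomp Require Import all_boot all_algebra.
From mathcomp Require Import boolp classical_sets.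
From Stdlib Require List.
Import GRing.Theory.
Local Open Scope ring_scope.
Local Open Scope classical_set_scope.
Set Implicit Arguments.
Unset Strict Implicit.
Unset Printing Implicit Defensive.

Lemma InP (T : eqType) (x : T) (s : seq T) : List.In x s <-> x \in s.
Proof.
elim: s => [|y s IH] //=; rewrite in_cons; split.
- by case=> [->|/IH ->]; rewrite ?eqxx ?orbT.
- by case/orP=> [/eqP ->|/IH]; [left|right].
Qed.

Lemma inMap (T U : Type) (f : T -> U) (s : seq T) (p : U) :
  List.In p (map f s) -> exists q, f q = p /\ List.In q s.
Proof. by move/List.in_map_iff. Qed.

Lemma inApp (T : Type) (s1 s2 : seq T) (p : T) :
  List.In p (s1 ++ s2) -> List.In p s1 \/ List.In p s2.
Proof. exact: List.in_app_or. Qed.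

Lemma inApp2 (T : Type) (s1 s2 : seq T) (p : T) :
  List.In p s1 \/ List.In p s2 -> List.In p (s1 ++ s2).
Proof. exact: List.in_or_app. Qed.

Section Sums.
Variables (k : fieldType) (A : algType k).

Lemma sumI_seq (Pu : A -> Prop) (f : A -> A -> A) (x : A) :
  (exists r (u w : 'I_r -> A), (forall i, Pu (u i)) /\ x = \sum_(i < r) f (u i) (w i)) <->
  (exists s : seq (A * A), (forall p, List.In p s -> Pu p.1) /\ x = \sum_(p <- s) f p.1 p.2).
Proof.
split.
- move=> [r [u [w [Hu ->]]]].
  exists [seq (u i, w i) | i <- index_enum 'I_r]; split.
  + move=> p /List.in_map_iff [i [<- _]]; exact: Hu.
  + by rewrite big_map.
- move=> [s [Hs ->]].
  exists (size s), (fun i => (nth (0,0) s i).1), (fun i => (nth (0,0) s i).2); split.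
  + move=> i; apply: Hs; apply/InP; exact: mem_nth.
  + by rewrite (big_nth (0,0)) big_mkord.
Qed.

Lemma sumI2_seq (P1 P2 : A -> Prop) (x : A) :
  (exists r (u w : 'I_r -> A), [/\ (forall i, P1 (u i)), (forall i, P2 (w i)) & x = \sum_(i < r) u i * w i]) <->
  (exists s : seq (A * A), (forall p, List.In p s -> P1 p.1 /\ P2 p.2) /\ x = \sum_(p <- s) p.1 * p.2).
Proof.
split.
- move=> [r [u [w [Hu Hw ->]]]].
  exists [seq (u i, w i) | i <- index_enum 'I_r]; split.
  + move=> p /List.in_map_iff [i [<- _]]; split; [exact: Hu | exact: Hw].
  + by rewrite big_map.
- move=> [s [Hs ->]].
  exists (size s), (fun i => (nth (0,0) s i).1), (fun i => (nth (0,0) s i).2); split.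
  + move=> i; apply: (Hs _ _).1; apply/InP; exact: mem_nth.
  + move=> i; apply: (Hs _ _).2; apply/InP; exact: mem_nth.
  + by rewrite (big_nth (0,0)) big_mkord.
Qed.
End Sums.

Lemma sum_closed (V : zmodType) (P : V -> Prop) (T : Type) (s : seq T) (F : T -> V) :
  P 0 -> (forall x y, P x -> P y -> P (x + y)) ->
  (forall t, List.In t s -> P (F t)) -> P (\sum_(t <- s) F t).
Proof.
move=> P0 PD; elim: s => [|t s IH] H; first by rewrite big_nil.
rewrite big_cons; apply: PD; first by apply: H; left.
by apply: IH => u Hu; apply: H; right.
Qed.

Section Ideals.
Variables (k : fieldType) (A : algType k) (G : set A).
Hypothesis hG : subalgebra G.

Lemma G1 : G 1. Proof. by case: hG. Qed.
Lemma GD x y : G x -> G y -> G (x + y). Proof. by case: hG => _ H _ _; apply: H. Qed.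
Lemma GM x y : G x -> G y -> G (x * y). Proof. by case: hG => _ _ H _; apply: H. Qed.
Lemma GZ c x : G x -> G (c *: x). Proof. by case: hG => _ _ _ H; apply: H. Qed.
Lemma G0 : G 0. Proof. by rewrite -(scale0r (1 : A)); apply: GZ; apply: G1. Qed.
Lemma GN x : G x -> G (- x). Proof. by move=> Hx; rewrite -scaleN1r; apply: GZ. Qed.
Lemma GB x y : G x -> G y -> G (x - y). Proof. by move=> Hx Hy; apply: GD => //; apply: GN. Qed.

Section OneIdeal.
Variable I : set A.
Hypothesis hI : ideal2 G I.
Lemma idl_sub : I `<=` G. Proof. by case: hI. Qed.
Lemma idl0 : I 0. Proof. by case: hI. Qed.
Lemma idlD x y : I x -> I y -> I (x + y). Proof. by case: hI => _ _ H _ _; apply: H. Qed.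
Lemma idlZ c x : I x -> I (c *: x). Proof. by case: hI => _ _ _ H _; apply: H. Qed.
Lemma idlN x : I x -> I (- x). Proof. by move=> Hx; rewrite -scaleN1r; apply: idlZ. Qed.
Lemma idlB x y : I x -> I y -> I (x - y). Proof. by move=> Hx Hy; apply: idlD => //; apply: idlN. Qed.
Lemma idlMl g x : G g -> I x -> I (g * x). Proof. by case: hI => _ _ _ _ H Hg Hx; case: (H _ _ Hg Hx). Qed.
Lemma idlMr g x : G g -> I x -> I (x * g). Proof. by case: hI => _ _ _ _ H Hg Hx; case: (H _ _ Hg Hx). Qed.
End OneIdeal.

Lemma idealMulE (I J : set A) x : idealMul I J x <->
  (exists s : seq (A * A), (forall p, List.In p s -> I p.1 /\ J p.2) /\ x = \sum_(p <- s) p.1 * p.2).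
Proof. exact: sumI2_seq. Qed.

Lemma idealMul_ideal I J : ideal2 G I -> ideal2 G J -> ideal2 G (idealMul I J).
Proof.
move=> hI hJ; split.
- move=> x /idealMulE [s [Hs ->]]; apply: sum_closed; [exact: G0|exact: GD|].
  by move=> p /Hs [H1 H2]; apply: GM; [exact: (idl_sub hI H1)|exact: (idl_sub hJ H2)].
- by apply/idealMulE; exists [::]; rewrite big_nil.
- move=> x y /idealMulE [s1 [H1 ->]] /idealMulE [s2 [H2 ->]]; apply/idealMulE.
  exists (s1 ++ s2); rewrite big_cat; split => // p Hp; case: (inApp Hp) => Hq; [exact: H1|exact: H2].
- move=> c x /idealMulE [s [Hs ->]]; apply/idealMulE.
  exists [seq (c *: p.1, p.2) | p <- s]; split.
  + move=> p Hp; case: (inMap Hp) => q [Eq Hq]; subst p; case: (Hs _ Hq) => Hq1 Hq2; split => //; exact: idlZ.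
  + by rewrite big_map scaler_sumr; apply: eq_bigr => p _; rewrite scalerAl.
- move=> g x Hg /idealMulE [s [Hs ->]]; split; apply/idealMulE.
  + exists [seq (g * p.1, p.2) | p <- s]; split.
    * move=> p Hp; case: (inMap Hp) => q [Eq Hq]; subst p; case: (Hs _ Hq) => Hq1 Hq2; split => //; exact: idlMl.
    * by rewrite big_map mulr_sumr; apply: eq_bigr => p _; rewrite mulrA.
  + exists [seq (p.1, p.2 * g) | p <- s]; split.
    * move=> p Hp; case: (inMap Hp) => q [Eq Hq]; subst p; case: (Hs _ Hq) => Hq1 Hq2; split => //; exact: idlMr.
    * by rewrite big_map mulr_suml; apply: eq_bigr => p _; rewrite mulrA.
Qed.

Lemma idealMul_subl I J : ideal2 G I -> J `<=` G -> idealMul I J `<=` I.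
Proof.
move=> hI hJ x /idealMulE [s [Hs ->]]; apply: sum_closed; [exact: idl0|exact: idlD|].
by move=> p /Hs [H1 H2]; apply: idlMr => //; apply: hJ.
Qed.

Lemma idealMul_subr I J : I `<=` G -> ideal2 G J -> idealMul I J `<=` J.
Proof.
move=> hI hJ x /idealMulE [s [Hs ->]]; apply: sum_closed; [exact: idl0|exact: idlD|].
by move=> p /Hs [H1 H2]; apply: idlMl => //; apply: hI.
Qed.

Lemma idealMul_mono (I J J' : set A) : J `<=` J' -> idealMul I J `<=` idealMul I J'.
Proof.
move=> hJ x /idealMulE [s [Hs ->]]; apply/idealMulE; exists s; split => // p /Hs [H1 H2].
by split => //; apply: hJ.
Qed.

Lemma G_ideal : ideal2 G G.
Proof.
split => //; [exact: G0|exact: GD|exact: GZ|].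
by move=> g x Hg Hx; split; apply: GM.
Qed.

Lemma foldr_idealX (s : seq (set A)) X : (forall I, List.In I s -> ideal2 G I) ->
  ideal2 G X -> ideal2 G (foldr (@idealMul _ A) X s).
Proof.
move=> H hX; elim: s H => [|I s IH] H //=.
apply: idealMul_ideal; first by apply: H; left.
by apply: IH => J HJ; apply: H; right.
Qed.

Lemma foldr_ideal (s : seq (set A)) : (forall I, List.In I s -> ideal2 G I) ->
  ideal2 G (foldr (@idealMul _ A) G s).
Proof. by move=> H; apply: foldr_idealX => //; apply: G_ideal. Qed.

Lemma foldr_sub (s : seq (set A)) X : (forall I, List.In I s -> ideal2 G I) ->
  ideal2 G X -> foldr (@idealMul _ A) X s `<=` X.
Proof.
move=> H hX; elim: s H => [|I s IH] H //=.
have H' : forall J, List.In J s -> ideal2 G J by move=> J HJ; apply: H; right.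
move=> x Hx; apply: (IH H').
apply: (idealMul_subr _ _ Hx); first by apply: idl_sub; apply: H; left.
exact: foldr_idealX.
Qed.

Lemma foldr_mono (s : seq (set A)) (X Y : set A) : X `<=` Y -> foldr (@idealMul _ A) X s `<=` foldr (@idealMul _ A) Y s.
Proof. by elim: s => [|I s IH] //= H; apply: idealMul_mono; apply: IH. Qed.

Definition comax (I J : set A) := exists p q, [/\ I p, J q & p + q = 1].

Lemma comax_sym I J : comax I J -> comax J I.
Proof. by move=> [p [q [Hp Hq E]]]; exists q, p; split => //; rewrite addrC. Qed.

Lemma comaxG I : ideal2 G I -> comax I G.
Proof. move=> hI; exists 0, 1; split; [exact: idl0|exact: G1|by rewrite add0r]. Qed.

Lemma comax_mul I J1 J2 : ideal2 G I -> J1 `<=` G -> comax I J1 -> comax I J2 ->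
  comax I (idealMul J1 J2).
Proof.
move=> hI hJ1 [p1 [q1 [Hp1 Hq1 E1]]] [p2 [q2 [Hp2 Hq2 E2]]].
exists (p1 + q1 * p2), (q1 * q2); split.
- by apply: idlD => //; apply: idlMl => //; apply: hJ1.
- apply/idealMulE; exists [:: (q1, q2)]; split; last by rewrite big_seq1.
  by move=> p [<-|[]].
- by rewrite -addrA -mulrDr E2 mulr1.
Qed.

Lemma max_comax I J : max_ideal2 G I -> max_ideal2 G J -> I <> J -> comax I J.
Proof.
move=> [hI [g [Gg nIg]] mI] [hJ [g' [Gg' nJg']] mJ] IJ.
pose S := [set x | exists y z, [/\ I y, J z & x = y + z]].
have hS : ideal2 G S.
  split.
  - move=> x [y [z [Hy Hz ->]]]; apply: GD; [exact: (idl_sub hI Hy)|exact: (idl_sub hJ Hz)].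
  - by exists 0, 0; split; rewrite ?addr0 //; apply: idl0.
  - move=> x x' [y [z [Hy Hz ->]]] [y' [z' [Hy' Hz' ->]]].
    exists (y + y'), (z + z'); split; [exact: idlD|exact: idlD|by rewrite addrACA].
  - move=> c x [y [z [Hy Hz ->]]]; exists (c *: y), (c *: z); split;
      [exact: idlZ|exact: idlZ|by rewrite scalerDr].
  - move=> h x Hh [y [z [Hy Hz ->]]]; split.
    + exists (h * y), (h * z); split; [exact: idlMl|exact: idlMl|by rewrite mulrDr].
    + exists (y * h), (z * h); split; [exact: idlMr|exact: idlMr|by rewrite mulrDl].
have IS : I `<=` S by move=> x Hx; exists x, 0; split; rewrite ?addr0 //; apply: idl0.
case: (mI _ hS IS) => [SI|SG].
- exfalso.
  have JI : J `<=` I by move=> x Hx; rewrite -SI; exists 0, x; split; rewrite ?add0r //; apply: idl0.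
  case: (mJ _ hI JI) => [/esym //|IG].
  by apply: nIg; rewrite IG.
- have : S 1 by rewrite SG; apply: G1.
  by move=> [y [z [Hy Hz E]]]; exists y, z; split.
Qed.

End Ideals.

Section Classes.
Variables (k : fieldType) (A : algType k) (G : set A) (sim : set A -> set A -> Prop).
Hypothesis hG : subalgebra G.
Hypothesis hsim : equiv_on_cfs G sim.

Notation cls := (is_class G sim).
Notation W := (Wset G).

Lemma class_max B I : cls B -> B I -> max_ideal2 G I.
Proof. by move=> [m [_ ->]] [[]]. Qed.

Lemma class_ideal B I : cls B -> B I -> ideal2 G I.
Proof. by move=> hB HI; case: (class_max hB HI). Qed.

Lemma W_G B : W B G.
Proof. by exists [::]; split => //; constructor. Qed.

Lemma W_list B m : W B m -> exists s, (forall I, List.In I s -> B I) /\ m = foldr (@idealMul _ A) G s.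
Proof. by move=> [s [/List.Forall_forall H ->]]; exists s. Qed.

Lemma W_ideal B m : cls B -> W B m -> ideal2 G m.
Proof.
move=> hB /W_list [s [Hs ->]]; apply: foldr_ideal => // I HI.
exact: (class_ideal hB (Hs _ HI)).
Qed.

Lemma W_subG B m : cls B -> W B m -> m `<=` G.
Proof. by move=> hB hm; apply: idl_sub; apply: (W_ideal hB hm). Qed.

Lemma W_meet B m1 m2 : cls B -> W B m1 -> W B m2 ->
  exists m, [/\ W B m, m `<=` m1 & m `<=` m2].
Proof.
move=> hB /W_list [s1 [H1 ->]] /W_list [s2 [H2 ->]].
have I1 : forall I, List.In I s1 -> ideal2 G I by move=> I HI; exact: (class_ideal hB (H1 _ HI)).
have I2 : forall I, List.In I s2 -> ideal2 G I by move=> I HI; exact: (class_ideal hB (H2 _ HI)).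
exists (foldr (@idealMul _ A) G (s1 ++ s2)); split.
- exists (s1 ++ s2); split => //; apply/List.Forall_forall => I HI.
  by case: (inApp HI) => [/H1|/H2].
- rewrite foldr_cat; apply: foldr_mono; apply: (foldr_sub hG) => //; exact: (G_ideal hG).
- rewrite foldr_cat; apply: (foldr_sub hG) => //; exact: (foldr_ideal hG).
Qed.

Lemma W_meet_list B (ms : seq (set A)) : cls B -> (forall m, List.In m ms -> W B m) ->
  exists m, W B m /\ forall m', List.In m' ms -> m `<=` m'.
Proof.
move=> hB; elim: ms => [|m0 ms IH] H.
- by exists G; split => //; exact: W_G.
- case: IH => [m' Hm'|m [Hm Hsub]]; first by apply: H; right.
  case: (W_meet hB Hm (H m0 (or_introl erefl))) => m2 [Hm2 S1 S2].
  exists m2; split => // m'' [<-|Hin] //.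
  by move=> x Hx; apply: Hsub => //; apply: S1.
Qed.

Lemma class_eq B C I : cls B -> cls C -> B I -> C I -> B = C.
Proof.
case: hsim => refl symm trans.
move=> [b [cb ->]] [c [cc ->]] [cI sbI] [_ scI].
apply/seteqP; split => x [cx Hx]; split => //.
- exact: (trans c I x cc cI cx scI (trans I b x cI cb cx (symm b I cb cI sbI) Hx)).
- exact: (trans b I x cb cI cx sbI (trans I c x cI cc cx (symm c I cc cI scI) Hx)).
Qed.

Lemma W_comax B C m n : cls B -> cls C -> B <> C -> W B m -> W C n -> comax m n.
Proof.
move=> hB hC BC /W_list [s [Hs ->]] /W_list [t [Ht ->]].
have It : forall I, List.In I t -> ideal2 G I by move=> I HI; exact: (class_ideal hC (Ht _ HI)).
have one : forall I, B I -> comax I (foldr (@idealMul _ A) G t).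
  move=> I HI; have hI := class_ideal hB HI.
  elim: t Ht It => [|J t IH] Ht It /=; first exact: (comaxG hG).
  apply: (comax_mul (G:=G)) => //.
  - by apply: idl_sub; apply: It; left.
  - apply: (max_comax hG); [exact: (class_max hB HI)|exact: (class_max hC (Ht _ (or_introl erefl)))|].
    by move=> E; apply: BC; apply: (class_eq hB hC HI); rewrite E; apply: Ht; left.
  - by apply: IH => J' HJ'; [apply: Ht|apply: It]; right.
have hT : ideal2 G (foldr (@idealMul _ A) G t) by exact: (foldr_ideal hG).
elim: s Hs => [|I s IH] Hs /=; first by apply: comax_sym; apply: (comaxG hG).
apply: comax_sym; apply: (comax_mul (G:=G)) => //.
- by apply: idl_sub; apply: (class_ideal hB (Hs _ (or_introl erefl))).
- by apply: comax_sym; apply: one; apply: Hs; left.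
- by apply: comax_sym; apply: IH => J HJ; apply: Hs; right.
Qed.

End Classes.

Lemma sum_pick (V : zmodType) (T : eqType) (u : seq T) (c : T) (F : V) :
  uniq u -> c \in u -> \sum_(d <- u) (if c == d then F else 0) = F.
Proof.
move=> uu cu; rewrite (bigD1_seq c) //= eqxx big1 ?addr0 // => d /negPf.
by rewrite eq_sym => ->.
Qed.

Lemma sum_nth (V : zmodType) (T : Type) (x0 : T) (u : seq T) (F : T -> V) :
  \sum_(j < size u) F (nth x0 u j) = \sum_(d <- u) F d.
Proof. by rewrite (big_nth x0) big_mkord. Qed.

Section Mod.
Variables (k : fieldType) (A : algType k) (G : set A) (sim : set A -> set A -> Prop).
Hypothesis hG : subalgebra G.
Hypothesis hsim : equiv_on_cfs G sim.
Variables (N : set A) (act : A -> A -> A) (comb : A -> A -> A).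
Hypothesis hN0 : N 0.
Hypothesis hNB : forall x y, N x -> N y -> N (x - y).
Hypothesis hNact : forall g x, G g -> N x -> N (act g x).
Hypothesis actB : forall g x y, act g (x - y) = act g x - act g y.
Hypothesis actDl : forall g h x, act (g + h) x = act g x + act h x.
Hypothesis act1 : forall x, act 1 x = x.
Hypothesis hcomb : forall g h x, act h (act g x) = act (comb g h) x.
Hypothesis hcombI : forall I g h, ideal2 G I -> G g -> I h -> I (comb g h).

Notation cls := (is_class G sim).
Notation W := (Wset G).

Definition part (C : set (set A)) (x : A) := bpart G (V:=A) setT N act C x.
Definition Span (n : set A) (x : A) :=
  exists s : seq (A * A), (forall p, List.In p s -> n p.1) /\ x = \sum_(p <- s) act p.1 p.2.
Definition Qp (C : set (set A)) (x : A) :=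
  exists s : seq (set (set A) * A),
    (forall p, List.In p s -> [/\ cls p.1, p.1 <> C & part p.1 p.2]) /\
    N (x - \sum_(p <- s) p.2).

Lemma act0 g : act g 0 = 0.
Proof. by have := actB g 0 0; rewrite subr0 subrr. Qed.
Lemma actN g x : act g (- x) = - act g x.
Proof. by rewrite -sub0r actB act0 sub0r. Qed.
Lemma actD g x y : act g (x + y) = act g x + act g y.
Proof. by have := actB g x (- y); rewrite opprK => ->; rewrite actN opprK. Qed.
Lemma act_sum g (T : Type) (s : seq T) (F : T -> A) :
  act g (\sum_(t <- s) F t) = \sum_(t <- s) act g (F t).
Proof.
elim: s => [|t s IH]; first by rewrite !big_nil act0.
by rewrite !big_cons actD IH.
Qed.

Lemma hNN x : N x -> N (- x).
Proof. by move=> Hx; rewrite -sub0r; apply: hNB. Qed.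
Lemma hND x y : N x -> N y -> N (x + y).
Proof. by move=> Hx Hy; rewrite -(opprK y); apply: hNB => //; apply: hNN. Qed.

Lemma partN C x : N x -> part C x.
Proof.
move=> Hx; split => //; exists G; split; first exact: W_G.
by move=> g Hg; apply: hNact.
Qed.

Lemma partB C x y : cls C -> part C x -> part C y -> part C (x - y).
Proof.
move=> hC [_ [m1 [W1 K1]]] [_ [m2 [W2 K2]]]; split => //.
case: (W_meet hG hC W1 W2) => m [Wm S1 S2]; exists m; split => // g Hg.
by rewrite actB; apply: hNB; [apply: K1; apply: S1|apply: K2; apply: S2].
Qed.

Lemma partNeg C x : cls C -> part C x -> part C (- x).
Proof. by move=> hC Hx; rewrite -sub0r; apply: partB => //; apply: partN. Qed.

Lemma partD C x y : cls C -> part C x -> part C y -> part C (x + y).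
Proof. by move=> hC Hx Hy; rewrite -(opprK y); apply: partB => //; apply: partNeg. Qed.

Lemma part_sum C (T : Type) (s : seq T) (F : T -> A) : cls C ->
  (forall t, List.In t s -> part C (F t)) -> part C (\sum_(t <- s) F t).
Proof.
move=> hC H; apply: (sum_closed (P := part C)) => //; first by apply: partN.
by move=> x y; apply: partD.
Qed.

Lemma part_act C g x : cls C -> G g -> part C x -> part C (act g x).
Proof.
move=> hC Hg [_ [m [Wm K]]]; split => //; exists m; split => // h Hh.
rewrite hcomb; apply: K; apply: (hcombI (W_ideal hG hC Wm)) => //.
Qed.

Lemma QN C x : N x -> Qp C x.
Proof. by move=> Hx; exists [::]; split => //; rewrite big_nil subr0. Qed.

Lemma QB C x y : Qp C x -> Qp C y -> Qp C (x - y).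
Proof.
move=> [s1 [H1 N1]] [s2 [H2 N2]].
exists (s1 ++ [seq (p.1, - p.2) | p <- s2]); split.
- move=> p Hp; case: (inApp Hp) => [/H1 //|Hq].
  case: (inMap Hq) => q [Eq Hq']; subst p; case: (H2 _ Hq') => c1 c2 c3.
  by split => //; apply: partNeg.
- rewrite big_cat big_map /= sumrN.
  have -> : x - y - (\sum_(i <- s1) i.2 - \sum_(i <- s2) i.2)
    = (x - \sum_(i <- s1) i.2) - (y - \sum_(i <- s2) i.2).
    by rewrite opprB [in RHS]opprB addrACA [in RHS]addrACA; congr (_ + _); exact: addrC.
  by apply: hNB.
Qed.

Lemma QNeg C x : Qp C x -> Qp C (- x).
Proof. by move=> Hx; rewrite -sub0r; apply: QB => //; apply: QN. Qed.

Lemma QD C x y : Qp C x -> Qp C y -> Qp C (x + y).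
Proof. by move=> Hx Hy; rewrite -(opprK y); apply: QB => //; apply: QNeg. Qed.

Lemma Q_act C g x : G g -> Qp C x -> Qp C (act g x).
Proof.
move=> Hg [s [Hs Ns]]; exists [seq (p.1, act g p.2) | p <- s]; split.
- move=> p Hp; case: (inMap Hp) => q [Eq Hq']; subst p; case: (Hs _ Hq') => c1 c2 c3.
  by split => //; apply: part_act.
- by rewrite big_map /= -act_sum -actB; apply: hNact.
Qed.

Lemma Q_part C C' x : cls C' -> C' <> C -> part C' x -> Qp C x.
Proof.
move=> hC' CC' Hx; exists [:: (C', x)]; split.
- by move=> p [<-|[]].
- by rewrite big_seq1 subrr.
Qed.

Section Block.
Hypothesis hblock : block_mod G sim (V:=A) setT N act.

Lemma GU (s : seq (set (set A) * A)) :
  (forall p, List.In p s -> cls p.1 /\ part p.1 p.2) ->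
  N (\sum_(p <- s) p.2) -> forall C, N (\sum_(p <- s | p.1 == C) p.2).
Proof.
move=> Hs Nsum C.
case: hblock => _ uniqB.
set u := undup [seq p.1 | p <- s].
have uu : uniq u by apply: undup_uniq.
pose Bs := fun j : 'I_(size u) => nth set0 u j.
pose w := fun j : 'I_(size u) => \sum_(p <- s | p.1 == Bs j) p.2.
have Bu : forall j : 'I_(size u), Bs j \in u by move=> j; apply: mem_nth.
have inS : forall c, c \in u -> exists p, List.In p s /\ p.1 = c.
  move=> c; rewrite mem_undup => /mapP [p /InP ps ->]; by exists p.
have Hcls : forall j, cls (Bs j).
  by move=> j; case: (inS _ (Bu j)) => p [ps <-]; case: (Hs _ ps).
have Hinj : injective Bs.
  move=> i j E; apply: val_inj => /=; apply/eqP.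
  by rewrite -(nth_uniq set0 (ltn_ord i) (ltn_ord j) uu); apply/eqP.
have Hpart : forall j, bpart G (V:=A) setT N act (Bs j) (w j).
  move=> j; change (part (Bs j) (w j)); rewrite /w big_seq_cond big_mkcond.
  apply: part_sum => // p _; case: ifP => [/andP [/InP ps /eqP E]|_]; last by apply: partN.
  by case: (Hs _ ps); rewrite E.
have Hsum : \sum_(j < size u) w j = \sum_(p <- s) p.2.
  rewrite /w; under eq_bigr do rewrite big_mkcond /=.
  rewrite exchange_big /=; apply: eq_big_seq => p ps.
  rewrite (sum_nth set0 u (fun d => if p.1 == d then p.2 else 0)).
  by apply: sum_pick => //; rewrite mem_undup; apply: map_f.
have Nw := uniqB _ Bs w Hcls Hinj Hpart (eq_ind_r N Nsum Hsum).
case Cu: (C \in u).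
- have jlt : (index C u < size u)%N by rewrite index_mem.
  have := Nw (Ordinal jlt); rewrite /w /Bs /= nth_index //.
- rewrite big_seq_cond big1 // => p /andP [ps /eqP E].
  by exfalso; move: Cu; rewrite -E mem_undup map_f.
Qed.

Lemma Qpart_N C x : cls C -> part C x -> Qp C x -> N x.
Proof.
move=> hC Hx [s [Hs Ns]].
pose s' := (C, x) :: [seq (p.1, - p.2) | p <- s].
have Hs' : forall p, List.In p s' -> cls p.1 /\ part p.1 p.2.
  move=> p [<-|Hp] //; case: (inMap Hp) => q [Eq Hq']; subst p.
  by case: (Hs _ Hq') => c1 c2 c3; split => //; apply: partNeg.
have Ns' : N (\sum_(p <- s') p.2) by rewrite big_cons big_map /= sumrN.
have := GU Hs' Ns' C; rewrite big_cons /=.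
case: eqP => // _; rewrite big_map /= big_seq_cond big1 ?addr0 // => p /andP [/InP ps /eqP E].
by case: (Hs _ ps).
Qed.

Lemma decomp C y : cls C -> exists x, part C x /\ Qp C (y - x).
Proof.
move=> hC; case: hblock => hex _; case: (hex y Logic.I) => n [Bs [vs [Hc Hinj Hp Ny]]].
exists (\sum_(i < n | Bs i == C) vs i); split.
- rewrite big_mkcond; apply: part_sum => // i _.
  case: eqP => [E|_]; last by apply: partN.
  have := Hp i; rewrite E => //.
- exists [seq (Bs i, vs i) | i <- [seq i <- index_enum 'I_n | Bs i != C]]; split.
  + move=> p Hp'; case: (inMap Hp') => i [Eq Hi]; subst p; split; [exact: Hc| |exact: Hp].
    by move: Hi => /InP; rewrite mem_filter => /andP [/eqP].
  + rewrite big_map big_filter /=.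
    move: Ny; rewrite (bigID (fun i => Bs i == C)) /=.
    by rewrite opprD addrA.
Qed.

Lemma Span0 n : Span n 0.
Proof. by exists [::]; split => //; rewrite big_nil. Qed.

Lemma SpanD n x y : Span n x -> Span n y -> Span n (x + y).
Proof.
move=> [s1 [H1 ->]] [s2 [H2 ->]]; exists (s1 ++ s2); split; last by rewrite big_cat.
by move=> p Hp; case: (inApp Hp) => [/H1|/H2].
Qed.

Lemma kill_iii C (n : set A) x y z : cls C ->
  (forall x, part C x -> forall g, n g -> N (act g x)) -> n `<=` G ->
  part C x -> Span n y -> N z -> x = y + z -> N x.
Proof.
move=> hC hkill nG Hx [s [Hs Ey]] Hz Ex.
have Qy : Qp C y.
  rewrite Ey; apply: (sum_closed (P := Qp C)); [exact: QN|exact: QD|].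
  move=> p Hp; case: (decomp p.2 hC) => x' [Hx' Q'].
  rewrite -(subrK x' p.2) actD; apply: QD.
  + by apply: Q_act => //; apply: nG; apply: Hs.
  + by apply: QN; apply: hkill => //; apply: Hs.
apply: (Qpart_N hC Hx); rewrite Ex; apply: QD => //; exact: QN.
Qed.

Lemma Q_SpN C (n : set A) q : cls C -> W C n -> Qp C q ->
  exists y' z, [/\ Span n y', N z & q = y' + z].
Proof.
move=> hC Wn.
pose SpN q := exists y' z, [/\ Span n y', N z & q = y' + z].
have SpND : forall q1 q2, SpN q1 -> SpN q2 -> SpN (q1 + q2).
  move=> q1 q2 [y1 [z1 [S1 N1 ->]]] [y2 [z2 [S2 N2 ->]]].
  exists (y1 + y2), (z1 + z2); split; [exact: SpanD|exact: hND|exact: addrACA].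
have SpNN : forall q, N q -> SpN q by move=> q' Hq; exists 0, q'; split; rewrite ?add0r //; exact: Span0.
move=> -[s [Hs Ns]]; change (SpN q).
rewrite -(subrK (\sum_(p <- s) p.2) q); apply: (SpND _ _); first exact: SpNN.
apply: (sum_closed (P := SpN)); [exact: (SpNN _ hN0)|exact: SpND|].
move=> p Hp; case: (Hs _ Hp) => hp1 np1 [_ [m [Wm Km]]].
have [a [b [Ha Hb Eab]]] := W_comax hG hsim hC hp1 (fun E => np1 (esym E)) Wn Wm.
exists (act a p.2), (act b p.2); split.
- by exists [:: (a, p.2)]; split; [move=> p' [<-|[]]|rewrite big_seq1].
- by apply: Km.
- by rewrite -actDl Eab act1.
Qed.

Lemma surj_iv C (n : set A) y : cls C -> W C n ->
  exists x, part C x /\ exists y' z, [/\ Span n y', N z & y - x = y' + z].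
Proof.
move=> hC Wn; case: (decomp y hC) => x [Hx Qx]; exists x; split => //.
by apply: (Q_SpN (C:=C)) => //.
Qed.

End Block.
End Mod.

Section MulS.
Variables (k : fieldType) (A : algType k).

Lemma rmulSE (m : set A) x : rmulS m x <->
  exists s : seq (A * A), (forall p, List.In p s -> m p.1) /\ x = \sum_(p <- s) p.2 * p.1.
Proof. exact: (sumI_seq m (fun u w => w * u) x). Qed.

Lemma lmulSE (m : set A) x : lmulS m x <->
  exists s : seq (A * A), (forall p, List.In p s -> m p.1) /\ x = \sum_(p <- s) p.1 * p.2.
Proof. exact: (sumI_seq m (fun u w => u * w) x). Qed.

Lemma rmulS0 (m : set A) : rmulS m 0.
Proof. by apply/rmulSE; exists [::]; rewrite big_nil. Qed.
Lemma lmulS0 (m : set A) : lmulS m 0.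
Proof. by apply/lmulSE; exists [::]; rewrite big_nil. Qed.

Lemma rmulSB (m : set A) x y : rmulS m x -> rmulS m y -> rmulS m (x - y).
Proof.
move=> /rmulSE [s1 [H1 ->]] /rmulSE [s2 [H2 ->]]; apply/rmulSE.
exists (s1 ++ [seq (p.1, - p.2) | p <- s2]); split.
- move=> p Hp; case: (inApp Hp) => [/H1 //|Hq].
  by case: (inMap Hq) => q [Eq Hq']; subst p; exact: (H2 _ Hq').
- by rewrite big_cat big_map /= -sumrN; congr (_ + _); apply: eq_bigr => p _; rewrite mulNr.
Qed.
Lemma lmulSB (m : set A) x y : lmulS m x -> lmulS m y -> lmulS m (x - y).
Proof.
move=> /lmulSE [s1 [H1 ->]] /lmulSE [s2 [H2 ->]]; apply/lmulSE.
exists (s1 ++ [seq (p.1, - p.2) | p <- s2]); split.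
- move=> p Hp; case: (inApp Hp) => [/H1 //|Hq].
  by case: (inMap Hq) => q [Eq Hq']; subst p; exact: (H2 _ Hq').
- by rewrite big_cat big_map /= -sumrN; congr (_ + _); apply: eq_bigr => p _; rewrite mulrN.
Qed.

Lemma rmulSN (m : set A) x : rmulS m x -> rmulS m (- x).
Proof. by move=> Hx; rewrite -sub0r; apply: rmulSB => //; apply: rmulS0. Qed.
Lemma lmulSN (m : set A) x : lmulS m x -> lmulS m (- x).
Proof. by move=> Hx; rewrite -sub0r; apply: lmulSB => //; apply: lmulS0. Qed.
Lemma rmulSD (m : set A) x y : rmulS m x -> rmulS m y -> rmulS m (x + y).
Proof. by move=> Hx Hy; rewrite -(opprK y); apply: rmulSB => //; apply: rmulSN. Qed.
Lemma lmulSD (m : set A) x y : lmulS m x -> lmulS m y -> lmulS m (x + y).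
Proof. by move=> Hx Hy; rewrite -(opprK y); apply: lmulSB => //; apply: lmulSN. Qed.

Lemma rmulSMl (m : set A) a x : rmulS m x -> rmulS m (a * x).
Proof.
move=> /rmulSE [s [H ->]]; apply/rmulSE; exists [seq (p.1, a * p.2) | p <- s]; split.
- by move=> p Hp; case: (inMap Hp) => q [Eq Hq']; subst p; exact: (H _ Hq').
- by rewrite big_map mulr_sumr; apply: eq_bigr => p _; rewrite mulrA.
Qed.
Lemma lmulSMr (m : set A) a x : lmulS m x -> lmulS m (x * a).
Proof.
move=> /lmulSE [s [H ->]]; apply/lmulSE; exists [seq (p.1, p.2 * a) | p <- s]; split.
- by move=> p Hp; case: (inMap Hp) => q [Eq Hq']; subst p; exact: (H _ Hq').
- by rewrite big_map mulr_suml; apply: eq_bigr => p _; rewrite mulrA.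
Qed.

Lemma rmulS_in (m : set A) x : m x -> rmulS m x.
Proof. by move=> Hx; apply/rmulSE; exists [:: (x, 1)]; split; [move=> p [<-|[]]|rewrite big_seq1 mul1r]. Qed.
Lemma lmulS_in (m : set A) x : m x -> lmulS m x.
Proof. by move=> Hx; apply/lmulSE; exists [:: (x, 1)]; split; [move=> p [<-|[]]|rewrite big_seq1 mulr1]. Qed.

Lemma rmulS_mono (m m' : set A) x : m `<=` m' -> rmulS m x -> rmulS m' x.
Proof. by move=> S /rmulSE [s [H ->]]; apply/rmulSE; exists s; split => // p /H; apply: S. Qed.
Lemma lmulS_mono (m m' : set A) x : m `<=` m' -> lmulS m x -> lmulS m' x.
Proof. by move=> S /lmulSE [s [H ->]]; apply/lmulSE; exists s; split => // p /H; apply: S. Qed.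

Lemma nAAm0 (n m : set A) : nAAm n m 0.
Proof. by exists 0, 0; split; rewrite ?addr0 //; [apply: lmulS0|apply: rmulS0]. Qed.
Lemma nAAmB (n m : set A) x y : nAAm n m x -> nAAm n m y -> nAAm n m (x - y).
Proof.
move=> [y1 [z1 [H1 K1 ->]]] [y2 [z2 [H2 K2 ->]]].
exists (y1 - y2), (z1 - z2); split; [exact: lmulSB|exact: rmulSB|].
by rewrite opprD addrACA.
Qed.
Lemma nAAmN (n m : set A) x : nAAm n m x -> nAAm n m (- x).
Proof. by move=> Hx; rewrite -sub0r; apply: nAAmB => //; apply: nAAm0. Qed.
Lemma nAAmD (n m : set A) x y : nAAm n m x -> nAAm n m y -> nAAm n m (x + y).
Proof. by move=> Hx Hy; rewrite -(opprK y); apply: nAAmB => //; apply: nAAmN. Qed.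
Lemma nAAm_l (n m : set A) x : lmulS n x -> nAAm n m x.
Proof. by move=> Hx; exists x, 0; split; rewrite ?addr0 //; apply: rmulS0. Qed.
Lemma nAAm_r (n m : set A) x : rmulS m x -> nAAm n m x.
Proof. by move=> Hx; exists 0, x; split; rewrite ?add0r //; apply: lmulS0. Qed.
Lemma nAAm_sym (n m : set A) x : nAAm n m x -> nAAm n m (- x) .
Proof. exact: nAAmN. Qed.
End MulS.

Section LemmaN.
Variables (k : fieldType) (A : algType k) (G : set A) (sim : set A -> set A -> Prop).
Hypothesis hG : subalgebra G.
Hypothesis hsim : equiv_on_cfs G sim.
Hypothesis hstrong : strong_HC_block_subalg G sim.

Notation cls := (is_class G sim).
Notation W := (Wset G).

Lemma Lnact (m : set A) g x : G g -> rmulS m x -> rmulS m (g * x).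
Proof. by move=> _; apply: rmulSMl. Qed.
Lemma Rnact (m : set A) g x : G g -> lmulS m x -> lmulS m (x * g).
Proof. by move=> _; apply: lmulSMr. Qed.
Lemma LcombI (I : set A) g h : ideal2 G I -> G g -> I h -> I (h * g).
Proof. by move=> hI Hg Hh; exact: (idlMr hI Hg Hh). Qed.
Lemma RcombI (I : set A) g h : ideal2 G I -> G g -> I h -> I (g * h).
Proof. by move=> hI Hg Hh; exact: (idlMl hI Hg Hh). Qed.
Lemma Lcomb (g h x : A) : h * (g * x) = (h * g) * x. Proof. exact: mulrA. Qed.
Lemma Rcomb (g h x : A) : x * g * h = x * (g * h). Proof. by rewrite mulrA. Qed.

Lemma lemmaN B C D m l : cls B -> cls C -> cls D -> W B m -> W D l ->
  exists n, [/\ W C n,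
   (forall x, partR G C l x -> nAAm l n x -> lmulS l x),
   (forall y, exists x, partR G C l x /\ nAAm l n (y - x)),
   (forall x, partL G C m x -> nAAm n m x -> rmulS m x) &
   (forall y, exists x, partL G C m x /\ nAAm n m (y - x))] /\
  (forall x, partL G C m x -> forall g, n g -> rmulS m (g * x)) /\
  (forall x, partR G C l x -> forall g, n g -> lmulS l (x * g)).
Proof.
move=> hB hC hD Wm Wl.
case: (hstrong hB Wm) => [[blL strL] _]; case: (hstrong hD Wl) => [_ [blR strR]].
case: (strL C hC) => n1 [Wn1 K1]; case: (strR C hC) => n2 [Wn2 K2].
case: (W_meet hG hC Wn1 Wn2) => n [Wn S1 S2].
have nG := W_subG hG hC Wn.
have killL : forall x, partL G C m x -> forall g, n g -> rmulS m (g * x).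
  by move=> x Hx g Hg; apply: (K1 x Hx); apply: S1.
have killR : forall x, partR G C l x -> forall g, n g -> lmulS l (x * g).
  by move=> x Hx g Hg; apply: (K2 x Hx); apply: S2.
exists n; split; last by split.
split => //.
- move=> x Hx [y [z [Hy Hz E]]].
  apply: (kill_iii (N := lmulS l) (act := fun g x => x * g) (comb := fun g h => g * h)
    hG (lmulS0 l) (@lmulSB _ _ l) (@Rnact l) (fun g x y => mulrBl g x y) Rcomb
    RcombI blR hC killR nG Hx (y := z) (z := y)) => //.
  + by case/rmulSE: Hz => s [Hs Es]; exists s.
  + by rewrite E addrC.
- move=> y.
  case: (surj_iv (N := lmulS l) (act := fun g x => x * g) hG hsim (lmulS0 l) (@lmulSB _ _ l)
    (@Rnact l) (fun g x y => mulrBl g x y) (fun g h x => mulrDr x g h) (fun x => mulr1 x) blR y hC Wn)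
    => x [Hx [y' [z [Sy Nz E]]]].
  exists x; split => //; exists z, y'; split => //; last by rewrite E addrC.
  by case: Sy => s [Hs Es]; apply/rmulSE; exists s.
- move=> x Hx [y [z [Hy Hz E]]].
  apply: (kill_iii (N := rmulS m) (act := fun g x => g * x) (comb := fun g h => h * g)
    hG (rmulS0 m) (@rmulSB _ _ m) (@Lnact m) (fun g x y => mulrBr g x y) Lcomb
    LcombI blL hC killL nG Hx (y := y) (z := z)) => //.
  by case/lmulSE: Hy => s [Hs Es]; exists s.
- move=> y.
  case: (surj_iv (N := rmulS m) (act := fun g x => g * x) hG hsim (rmulS0 m) (@rmulSB _ _ m)
    (@Lnact m) (fun g x y => mulrBr g x y) (fun g h x => mulrDl g h x) (fun x => mul1r x) blL y hC Wn)
    => x [Hx [y' [z [Sy Nz E]]]].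
  exists x; split => //; exists y', z; split => //.
  by case: Sy => s [Hs Es]; apply/lmulSE; exists s.
Qed.

End LemmaN.

Section Wrap.
Variables (k : fieldType) (A : algType k) (G : set A) (sim : set A -> set A -> Prop).
Hypothesis hG : subalgebra G.
Hypothesis hsim : equiv_on_cfs G sim.
Hypothesis hstrong : strong_HC_block_subalg G sim.

Notation cls := (is_class G sim).
Notation W := (Wset G).

Definition QL (m : set A) C z := Qp G sim (rmulS m) (fun g x => g * x) C z.

Lemma blockL B m : cls B -> W B m -> block_mod G sim (V:=A) setT (rmulS m) (fun g x => g * x).
Proof. by move=> hB Wm; case: (hstrong hB Wm) => [[]]. Qed.
Lemma blockR B m : cls B -> W B m -> block_mod G sim (V:=A) setT (lmulS m) (fun g x => x * g).
Proof. by move=> hB Wm; case: (hstrong hB Wm) => _ []. Qed.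

Ltac instL := first [ exact: hG | exact: hsim | exact: rmulS0 | exact: rmulSB | exact: Lnact
  | exact: (fun g x y => mulrBr g x y) | exact: (fun g h x => mulrDl g h x) | exact: mul1r
  | exact: Lcomb | exact: LcombI | exact: lmulS0 | exact: lmulSB | exact: Rnact
  | exact: (fun g x y => mulrBl g x y) | exact: (fun g h x => mulrDr x g h) | exact: mulr1
  | exact: Rcomb | exact: RcombI | assumption ].

Lemma partL_N C m x : rmulS m x -> partL G C m x.
Proof. by move=> Hx; apply: (partN (N := rmulS m) (act := fun g x => g * x)); instL. Qed.

Lemma partL_B C m x y : cls C -> partL G C m x -> partL G C m y -> partL G C m (x - y).
Proof. by move=> hC Hx Hy; apply: (partB (sim:=sim) hG (N := rmulS m) (act := fun g x => g * x)); instL. Qed.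

Lemma partR_B C l x y : cls C -> partR G C l x -> partR G C l y -> partR G C l (x - y).
Proof. by move=> hC Hx Hy; apply: (partB (sim:=sim) hG (N := lmulS l) (act := fun g x => x * g)); instL. Qed.

Lemma partL_D C m x y : cls C -> partL G C m x -> partL G C m y -> partL G C m (x + y).
Proof. by move=> hC Hx Hy; apply: (partD (sim:=sim) hG (N := rmulS m) (act := fun g x => g * x)); instL. Qed.

Lemma partL_mono C (m m' : set A) x : m' `<=` m -> partL G C m' x -> partL G C m x.
Proof.
move=> S [_ [n [Wn K]]]; split => //; exists n; split => // g Hg.
by apply: (rmulS_mono S); apply: K.
Qed.

Lemma partL_G C m g : cls C -> W C m -> G g -> partL G C m g.
Proof.
move=> hC Wm Hg; split => //; exists m; split => // h Hh; apply: rmulS_in.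
exact: (idlMr (W_ideal hG hC Wm) Hg Hh).
Qed.

Lemma partR_G C l g : cls C -> W C l -> G g -> partR G C l g.
Proof.
move=> hC Wl Hg; split => //; exists l; split => // h Hh; apply: lmulS_in.
exact: (idlMl (W_ideal hG hC Wl) Hg Hh).
Qed.

Lemma QL_N m C x : rmulS m x -> QL m C x.
Proof. by move=> Hx; exists [::]; split => //; rewrite big_nil subr0. Qed.

Lemma QL_B m C x y : QL m C x -> QL m C y -> QL m C (x - y).
Proof. by move=> Hx Hy; apply: (QB (sim:=sim) hG (N := rmulS m) (act := fun g x => g * x)); instL. Qed.

Lemma QL_D m C x y : QL m C x -> QL m C y -> QL m C (x + y).
Proof. by move=> Hx Hy; apply: (QD (sim:=sim) hG (N := rmulS m) (act := fun g x => g * x)); instL. Qed.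

Lemma QL_part m C C' x : cls C' -> C' <> C -> partL G C' m x -> QL m C x.
Proof.
move=> hC' CC Hx; exists [:: (C', x)]; split; first by move=> p [<-|[]].
by rewrite big_seq1 subrr; apply: rmulS0.
Qed.

Lemma QL_mono (m m' : set A) C x : m' `<=` m -> QL m' C x -> QL m C x.
Proof.
move=> S [s [Hs Ns]]; exists s; split; last exact: (rmulS_mono S).
move=> p Hp; case: (Hs _ Hp) => c1 c2 c3; split => //; exact: (partL_mono S).
Qed.

Lemma QL_N_part B m C x : cls B -> W B m -> cls C -> partL G C m x -> QL m C x -> rmulS m x.
Proof.
move=> hB Wm hC Hx Qx.
exact (Qpart_N (sim:=sim) hG (N := rmulS m) (act := fun g x => g * x) (rmulS0 m) (@rmulSB _ _ m)
  (@Lnact _ _ G m) (fun g x y => mulrBr g x y) (blockL hB Wm) hC Hx Qx).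
Qed.

Lemma decompL B m C y : cls B -> W B m -> cls C -> exists x, partL G C m x /\ QL m C (y - x).
Proof.
move=> hB Wm hC.
exact (decomp (sim:=sim) hG (N := rmulS m) (act := fun g x => g * x) (rmulS0 m) (@rmulSB _ _ m)
  (@Lnact _ _ G m) (fun g x y => mulrBr g x y) (blockL hB Wm) y hC).
Qed.

Lemma QL_nAAm m n C q : cls C -> W C n -> QL m C q -> nAAm n m q.
Proof.
move=> hC Wn Hq.
have [y' [z [[s [Hs Es]] Nz E]]] : exists y' z, [/\ Span (fun g x => g * x) n y', rmulS m z & q = y' + z].
  exact (Q_SpN hG hsim (N := rmulS m) (act := fun g x => g * x) (rmulS0 m) (@rmulSB _ _ m)
    (fun g h x => mulrDl g h x) (fun x => mul1r x) hC Wn Hq).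
by exists y', z; split => //; apply/lmulSE; exists s.
Qed.

End Wrap.

Lemma mem_index_enum_In (n : nat) (i : 'I_n) : List.In i (index_enum 'I_n). Proof. by apply/InP; rewrite mem_index_enum. Qed.

Lemma tailL (k : fieldType) (A : algType k) (l n m : set A) (y b0 a0 : A) :
  nAAm l n (y - b0) -> (forall g, n g -> rmulS m (g * a0)) -> nAAm l m ((y - b0) * a0).
Proof.
move=> [y1 [z1 [H1 K1 ->]]] Kill; rewrite mulrDl; apply: nAAmD.
- by apply: nAAm_l; apply: lmulSMr.
- apply: nAAm_r; case/rmulSE: K1 => s [Hs ->]; rewrite mulr_suml.
  apply: sum_closed; [exact: rmulS0|exact: rmulSD|] => p Hp.
  by rewrite -mulrA; apply: rmulSMl; apply: Kill; apply: Hs.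
Qed.

Lemma tailR (k : fieldType) (A : algType k) (n m l : set A) (x a0 b0 : A) :
  nAAm n m (x - a0) -> (forall g, n g -> lmulS l (b0 * g)) -> nAAm l m (b0 * (x - a0)).
Proof.
move=> [y1 [z1 [H1 K1 ->]]] Kill; rewrite mulrDr; apply: nAAmD.
- apply: nAAm_l; case/lmulSE: H1 => s [Hs ->]; rewrite mulr_sumr.
  apply: sum_closed; [exact: lmulS0|exact: lmulSD|] => p Hp.
  by rewrite mulrA; apply: lmulSMr; apply: Kill; apply: Hs.
- by apply: nAAm_r; apply: rmulSMl.
Qed.

Section Func.
Variables (k : fieldType) (A : algType k) (G : set A) (sim : set A -> set A -> Prop).
Variable (Fo : set (set A) -> lmodType k).
Local Unset Implicit Arguments.
Variable (Fm : forall B C : set (set A), mor A -> Fo B -> Fo C).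
Local Set Implicit Arguments.
Hypothesis hG : subalgebra G.
Hypothesis hsim : equiv_on_cfs G sim.
Hypothesis hstrong : strong_HC_block_subalg G sim.
Hypothesis hF : profinite_module G sim Fm.

Notation cls := (is_class G sim).
Notation W := (Wset G).

Lemma img_isMor B C a : isMor G B C (img a).
Proof. by move=> m n m' n' *; rewrite /img subrr; apply: nAAm0. Qed.

Lemma FlinV B C al c u v : cls B -> cls C -> isMor G B C al ->
  Fm B C al (c *: u + v) = c *: Fm B C al u + Fm B C al v.
Proof. by case: hF => [[H _ _ _ _] _] hB hC hal; apply: H. Qed.

Lemma Fv0 B C al : cls B -> cls C -> isMor G B C al -> Fm B C al 0 = 0.
Proof.
move=> hB hC hal; have E := FlinV (-1) 0 0 hB hC hal.
by rewrite !scaleN1r !addNr in E.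
Qed.

Lemma FvD B C al u v : cls B -> cls C -> isMor G B C al ->
  Fm B C al (u + v) = Fm B C al u + Fm B C al v.
Proof. by move=> hB hC hal; rewrite -{1}(scale1r u) FlinV // scale1r. Qed.

Lemma FvZ B C al c u : cls B -> cls C -> isMor G B C al ->
  Fm B C al (c *: u) = c *: Fm B C al u.
Proof. by move=> hB hC hal; rewrite -(addr0 (c *: u)) FlinV // Fv0 // addr0. Qed.

Lemma Fv_sum B C al (T : Type) (s : seq T) (F : T -> Fo B) : cls B -> cls C -> isMor G B C al ->
  Fm B C al (\sum_(t <- s) F t) = \sum_(t <- s) Fm B C al (F t).
Proof.
move=> hB hC hal; elim: s => [|t s IH]; first by rewrite !big_nil Fv0.
by rewrite !big_cons FvD // IH.
Qed.

Lemma Fimg_lin B C a b c v : cls B -> cls C ->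
  Fm B C (img (c *: a + b)) v = c *: Fm B C (img a) v + Fm B C (img b) v.
Proof.
case: hF => [[_ H _ _ _] _] hB hC.
exact (H B C (img a) (img b) c hB hC (img_isMor _) (img_isMor _) v).
Qed.

Lemma FimgD B C a b v : cls B -> cls C ->
  Fm B C (img (a + b)) v = Fm B C (img a) v + Fm B C (img b) v.
Proof. by move=> hB hC; have := Fimg_lin a b 1 v hB hC; rewrite !scale1r. Qed.

Lemma Fimg0 B C v : cls B -> cls C -> Fm B C (img 0) v = 0.
Proof.
move=> hB hC; have E := Fimg_lin 0 0 (-1) v hB hC.
by rewrite !scaleN1r !addNr in E.
Qed.

Lemma Fimg_sum B C (T : Type) (s : seq T) (F : T -> A) v : cls B -> cls C ->
  Fm B C (img (\sum_(t <- s) F t)) v = \sum_(t <- s) Fm B C (img (F t)) v.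
Proof.
move=> hB hC; elim: s => [|t s IH]; first by rewrite !big_nil Fimg0.
by rewrite !big_cons FimgD // IH.
Qed.

Lemma Fmor_sum B C (T : Type) (s : seq T) (F : T -> mor A) v : cls B -> cls C ->
  (forall t, List.In t s -> isMor G B C (F t)) ->
  isMor G B C (fun m n => \sum_(t <- s) F t m n) /\
  Fm B C (fun m n => \sum_(t <- s) F t m n) v = \sum_(t <- s) Fm B C (F t) v.
Proof.
case: hF => [[_ H _ _ _] _] hB hC; elim: s => [|t s IH] Hs.
- split.
  + by move=> m n m' n' *; rewrite !big_nil subrr; apply: nAAm0.
  + rewrite big_nil -(Fimg0 v hB hC); congr (Fm B C _ v).
    by apply: funext => m; apply: funext => n; rewrite big_nil.
- have [IH1 IH2] := IH (fun u Hu => Hs u (or_intror Hu)).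
  have Ht := Hs t (or_introl erefl).
  have E : (fun m n => \sum_(u <- t :: s) F u m n) = (fun m n => 1 *: F t m n + \sum_(u <- s) F u m n).
    by apply: funext => m; apply: funext => n; rewrite big_cons scale1r.
  rewrite E; split.
  + move=> m n m' n' Wm Wn Wm' Wn' S1 S2.
    have := nAAmD (Ht m n m' n' Wm Wn Wm' Wn' S1 S2) (IH1 m n m' n' Wm Wn Wm' Wn' S1 S2).
    by rewrite !scale1r opprD addrACA.
  + by rewrite H // big_cons IH2 scale1r.
Qed.

Lemma Fimg_wd B C x y v : cls B -> cls C ->
  (forall m n, W B m -> W C n -> nAAm n m (x - y)) -> Fm B C (img x) v = Fm B C (img y) v.
Proof.
case: hF => [[_ _ H _ _] _] hB hC E.
exact (H B C (img x) (img y) hB hC (img_isMor _) (img_isMor _) E v).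
Qed.

Lemma Fid B v : cls B -> Fm B B (img 1) v = v.
Proof. by case: hF => [[_ _ _ H _] _] hB; apply: H. Qed.

Lemma Fcomp B C D al be ga v : cls B -> cls C -> cls D ->
  isMor G B C al -> isMor G C D be -> isMor G B D ga -> comp_rel G B C D al be ga ->
  Fm B D ga v = Fm C D be (Fm B C al v).
Proof. by case: hF => [[_ _ _ _ H] _] *; apply: H. Qed.

Lemma F_offdiag B C g v : cls B -> cls C -> B <> C -> G g -> Fm B C (img g) v = 0.
Proof.
move=> hB hC BC Hg; rewrite (@Fimg_wd B C g 0) ?Fimg0 // => m n Wm Wn.
have [p [q [Hp Hq Epq]]] := W_comax hG hsim hB hC BC Wm Wn.
exists (g * q), (g * p); split.
- apply: lmulS_in; exact: (idlMl (W_ideal hG hC Wn) Hg Hq).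
- by apply/rmulSE; exists [:: (p, g)]; split; [move=> p' [<-|[]]|rewrite big_seq1].
- by rewrite subr0 -mulrDr addrC Epq mulr1.
Qed.

Lemma F_kill B v : cls B -> exists m, W B m /\ forall g, m g -> Fm B B (img g) v = 0.
Proof.
case: hF => [_ Hc] hB.
case: (Hc B B (img 0) hB hB (img_isMor _) 1 (fun _ => v)) => s [Hs Hbe].
case: (W_meet_list hG hB (ms := [seq p.2 | p <- s])) => [m' Hm'|m [Wm Sm]].
  by case: (inMap Hm') => p [<- Hp]; case: (Hs _ Hp).
exists m; split => // g Hg.
rewrite -(Fimg0 v hB hB).
apply: (Hbe (img g) (img_isMor _) _ ord0) => p Hp.
rewrite /img subr0; apply: nAAm_l; apply: lmulS_in.
by apply: (Sm p.2) => //; apply: List.in_map.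
Qed.

Lemma F_kill_disc B : discrete_module G sim Fm -> cls B ->
  exists m, W B m /\ forall g, m g -> forall v, Fm B B (img g) v = 0.
Proof.
case=> [_ Hc] hB.
case: (Hc B B (img 0) hB hB (img_isMor _)) => s [Hs Hbe].
case: (W_meet_list hG hB (ms := [seq p.2 | p <- s])) => [m' Hm'|m [Wm Sm]].
  by case: (inMap Hm') => p [<- Hp]; case: (Hs _ Hp).
exists m; split => // g Hg v.
rewrite -(Fimg0 v hB hB).
apply: (Hbe (img g) (img_isMor _)) => p Hp.
rewrite /img subr0; apply: nAAm_l; apply: lmulS_in.
by apply: (Sm p.2) => //; apply: List.in_map.
Qed.

Lemma FG1 B C x g v : cls B -> cls C -> G g ->
  Fm B C (img (x * g)) v = Fm B C (img x) (Fm B B (img g) v).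
Proof.
move=> hB hC Hg; apply: Fcomp => //; try exact: img_isMor.
move=> m l Wm Wl.
case: (lemmaN hG hsim hstrong hB hB hC Wm Wl) => n [[Wn i ii iii iv] [kL kR]].
exists n; split => //; split => //; split => //; split => //; split => //.
move=> a0 b0 Ha Pa Hb Pb; rewrite /img in Ha Hb *.
have gp := partL_G hG hB Wm Hg.
have R1 : rmulS m (a0 - g) by apply: iii => //; exact: (partL_B hG hB Pa gp).
have -> : x * g - b0 * a0 = x * (g - a0) + (x - b0) * a0.
  by rewrite mulrBr mulrBl addrA subrK.
apply: nAAmD.
- by apply: nAAm_r; apply: rmulSMl; rewrite -opprB; apply: rmulSN.
- apply: (tailL (n := n)); last by move=> h Hh; apply: kL.
  by rewrite -opprB; apply: nAAmN.
Qed.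

Lemma FG2 B C x g v : cls B -> cls C -> G g ->
  Fm B C (img (g * x)) v = Fm C C (img g) (Fm B C (img x) v).
Proof.
move=> hB hC Hg; apply: Fcomp => //; try exact: img_isMor.
move=> m l Wm Wl.
case: (lemmaN hG hsim hstrong hB hC hC Wm Wl) => n [[Wn i ii iii iv] [kL kR]].
exists n; split => //; split => //; split => //; split => //; split => //.
move=> a0 b0 Ha Pa Hb Pb; rewrite /img in Ha Hb *.
have gp := partR_G hG hC Wl Hg.
have L1 : lmulS l (b0 - g) by apply: i => //; exact: (partR_B hG hC Pb gp).
have -> : g * x - b0 * a0 = (g - b0) * x + b0 * (x - a0).
  by rewrite mulrBr mulrBl addrA subrK.
apply: nAAmD.
- by apply: nAAm_l; apply: lmulSMr; rewrite -opprB; apply: lmulSN.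
- apply: (tailR (n := n)); last by move=> h Hh; apply: kR.
  by rewrite -opprB; apply: nAAmN.
Qed.


Definition piL (C : set (set A)) (x : A) (m : set A) : A :=
  match pselect (exists x', partL G C m x' /\ QL G sim m C (x - x')) with
  | left H => proj1_sig (cid H) | right _ => 0 end.

Lemma piL_spec B C x m : cls B -> W B m -> cls C ->
  partL G C m (piL C x m) /\ QL G sim m C (x - piL C x m).
Proof.
move=> hB Wm hC; rewrite /piL; case: pselect => [H|H]; first exact: (proj2_sig (cid H)).
by exfalso; apply: H; apply: (decompL hG hstrong x hB Wm hC).
Qed.

Definition gaL (y : A) C x : mor A := fun m l => y * piL C x m.

Lemma subsubK (x a b : A) : (x - a) - (x - b) = b - a.
Proof. by rewrite opprB addrC addrA subrK. Qed.

Lemma gaL_isMor B C D x y : cls B -> cls C -> isMor G B D (gaL y C x).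
Proof.
move=> hB hC m n m' n' Wm Wn Wm' Wn' S1 S2; rewrite /gaL -mulrBr.
apply: nAAm_r; apply: rmulSMl.
have [P1 Q1] := piL_spec x hB Wm hC; have [P2 Q2] := piL_spec x hB Wm' hC.
apply: (QL_N_part hG hstrong hB Wm hC).
- exact: (partL_B hG hC (partL_mono S1 P2) P1).
- rewrite -(subsubK x); exact: (QL_B hG Q1 (QL_mono S1 Q2)).
Qed.

Lemma F5 B C D x y v : cls B -> cls C -> cls D ->
  Fm B D (gaL y C x) v = Fm C D (img y) (Fm B C (img x) v).
Proof.
move=> hB hC hD; apply: Fcomp => //; [exact: img_isMor|exact: img_isMor|exact: gaL_isMor|].
move=> m l Wm Wl.
case: (lemmaN hG hsim hstrong hB hC hD Wm Wl) => n [[Wn i ii iii iv] [kL kR]].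
exists n; split => //; split => //; split => //; split => //; split => //.
move=> a0 b0 Ha Pa Hb Pb; rewrite /img /gaL in Ha Hb *.
have [P1 Q1] := piL_spec x hB Wm hC.
have R1 : rmulS m (a0 - piL C x m).
  apply: iii; first exact: (partL_B hG hC Pa P1).
  have -> : a0 - piL C x m = (a0 - x) + (x - piL C x m) by rewrite addrA subrK.
  exact: (nAAmD Ha (QL_nAAm hG hsim hC Wn Q1)).
have -> : y * piL C x m - b0 * a0 = y * (piL C x m - a0) + (y - b0) * a0.
  by rewrite mulrBr mulrBl addrA subrK.
apply: nAAmD.
- by apply: nAAm_r; apply: rmulSMl; rewrite -opprB; apply: rmulSN.
- apply: (tailL (n := n)); last by move=> h Hh; apply: kL.
  by rewrite -opprB; apply: nAAmN.
Qed.

Lemma Fzero_rm B C z v m : cls B -> cls C -> W B m ->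
  (forall g, m g -> Fm B B (img g) v = 0) -> rmulS m z -> Fm B C (img z) v = 0.
Proof.
move=> hB hC Wm K /rmulSE [s [Hs ->]]; rewrite Fimg_sum //.
rewrite big_seq big1 // => p /InP ps.
rewrite FG1 //; last by apply: (W_subG hG hB Wm); apply: Hs.
by rewrite K ?Fv0 //; [exact: img_isMor|apply: Hs].
Qed.

Lemma F_fin x B v : cls B ->
  exists S : seq (set (set A)), forall C, cls C -> ~ List.In C S -> Fm B C (img x) v = 0.
Proof.
move=> hB; case: (F_kill v hB) => m0 [Wm0 K0].
case: (blockL hstrong hB Wm0) => hex _; case: (hex x Logic.I) => n [Bs [vs [Hc Hinj Hp Ny]]].
exists [seq Bs i | i <- index_enum 'I_n] => C hC nC.
rewrite -(subrK (\sum_(i < n) vs i) x) FimgD // (Fzero_rm hB hC Wm0 K0 Ny) add0r.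
rewrite Fimg_sum // big1 // => i _.
have BC : Bs i <> C by move=> E; apply: nC; rewrite -E; apply: List.in_map; exact: mem_index_enum_In.
set u := Fm B C (img (vs i)) v.
case: (Hp i) => _ [ki [Wki Kki]].
case: (F_kill u hC) => n' [Wn' Kn'].
have [p [q [Hp' Hq Epq]]] := W_comax hG hsim (Hc i) hC BC Wki Wn'.
rewrite -(Fid u hC) -Epq FimgD // (Kn' q Hq) addr0 /u -FG2 //; last exact: (W_subG hG (Hc i) Wki Hp').
exact: (Fzero_rm hB hC Wm0 K0 (Kki p Hp')).
Qed.

Lemma F6 B D x y v : cls B -> cls D ->
  exists S0 : seq (set (set A)), (forall C, List.In C S0 -> cls C) /\
  forall S : seq (set (set A)), uniq S -> (forall C, C \in S -> cls C) ->
    (forall C, List.In C S0 -> C \in S) ->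
    Fm B D (img (y * x)) v = \sum_(C <- S) Fm C D (img y) (Fm B C (img x) v).
Proof.
move=> hB hD.
case: hF => [_ Hc]; case: (Hc B D (img (y * x)) hB hD (img_isMor _) 1 (fun _ => v)) => s [Hs Hbe].
have Hdec : forall m, W B m -> exists L, (forall C, List.In C L -> cls C) /\
    exists n (Bs : 'I_n -> set (set A)) (vs : 'I_n -> A),
    [/\ forall i, cls (Bs i), forall i, partL G (Bs i) m (vs i),
        rmulS m (x - \sum_(i < n) vs i) & forall i, List.In (Bs i) L].
  move=> m Wm; case: (blockL hstrong hB Wm) => hex _.
  case: (hex x Logic.I) => n [Bs [vs [Hc' _ Hp Ny]]].
  exists [seq Bs i | i <- index_enum 'I_n]; split.
  - by move=> C HC; case: (inMap HC) => i [<- _]; exact: Hc'.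
  - exists n, Bs, vs; split => // i; apply: List.in_map; exact: mem_index_enum_In.
have Hall : forall s' : seq (set A * set A), (forall p, List.In p s' -> W B p.1) -> exists S0,
    (forall C, List.In C S0 -> cls C) /\ forall p, List.In p s' ->
    exists n (Bs : 'I_n -> set (set A)) (vs : 'I_n -> A),
    [/\ forall i, cls (Bs i), forall i, partL G (Bs i) p.1 (vs i),
        rmulS p.1 (x - \sum_(i < n) vs i) & forall i, List.In (Bs i) S0].
  elim => [|p0 s' IH] Hs'; first by exists [::]; split => // p [].
  case: (IH (fun p Hp => Hs' p (or_intror Hp))) => S1 [C1 H1].
  case: (Hdec p0.1 (Hs' p0 (or_introl erefl))) => L [CL [n [Bs [vs [Hc' Hp Ny HL]]]]].
  exists (L ++ S1); split.
  - by move=> C HC; case: (inApp HC) => [/CL|/C1].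
  - move=> p [<-|Hp'].
    + by exists n, Bs, vs; split => // i; apply: inApp2; left; exact: HL.
    + case: (H1 p Hp') => n' [Bs' [vs' [a b c d]]]; exists n', Bs', vs'.
      by split => // i; apply: inApp2; right; exact: d.
case: (Hall s (fun p Hp => (Hs p Hp).1)) => S0 [CS0 HS0].
exists S0; split => // S uS CS S0S.
pose be := fun m l => \sum_(C <- S) gaL y C x m l.
have Hmor : forall C, List.In C S -> isMor G B D (gaL y C x).
  by move=> C /InP HC; apply: (gaL_isMor x y hB (CS C HC)).
case: (Fmor_sum (s := S) (F := fun C => gaL y C x) v hB hD Hmor) => bemor beE.
have Match : forall p, List.In p s -> nAAm p.2 p.1 (be p.1 p.2 - img (y * x) p.1 p.2).
  move=> p Hp; apply: nAAm_r; rewrite /be /gaL /img -mulr_sumr -mulrBr; apply: rmulSMl.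
  have Wm := (Hs p Hp).1.
  case: (HS0 p Hp) => n [Bs [vs [Hc' Hp' Ny HL]]].
  have dC : forall C, C \in S ->
      rmulS p.1 (piL C x p.1 - \sum_(i < n | Bs i == C) vs i).
    move=> C CinS; have hC := CS C CinS; have [P1 Q1] := piL_spec x hB Wm hC.
    apply: (QL_N_part hG hstrong hB Wm hC).
    - apply: (partL_B hG hC P1); rewrite big_mkcond.
      apply: sum_closed; [by apply: partL_N; apply: rmulS0|by move=> a b; apply: (partL_D hG hC)|].
      move=> i _; case: eqP => [E|_]; [rewrite -E; exact: Hp'|by apply: partL_N; apply: rmulS0].
    - rewrite -(subsubK x); apply: (QL_B hG _ Q1).
      have -> : x - \sum_(i < n | Bs i == C) vs i =
                (x - \sum_(i < n) vs i) + \sum_(i < n | Bs i != C) vs i.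
        by rewrite [in RHS](bigID (fun i => Bs i == C)) /= opprD addrA subrK.
      apply: (QL_D hG); first exact: QL_N.
      rewrite big_mkcond; apply: sum_closed; [by apply: QL_N; apply: rmulS0|by move=> a b; apply: (QL_D hG)|].
      move=> i _; case: ifP => [/eqP NE|_]; last by apply: QL_N; apply: rmulS0.
      exact: (QL_part (Hc' i) NE (Hp' i)).
  have ES : \sum_(C <- S) \sum_(i < n | Bs i == C) vs i = \sum_(i < n) vs i.
    under eq_bigr do rewrite big_mkcond.
    rewrite exchange_big /=; apply: eq_bigr => i _.
    by apply: sum_pick => //; apply: S0S; exact: HL.
  have -> : \sum_(C <- S) piL C x p.1 - x =
            \sum_(C <- S) (piL C x p.1 - \sum_(i < n | Bs i == C) vs i) + (\sum_(i < n) vs i - x).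
    by rewrite sumrB ES addrA subrK.
  apply: rmulSD.
  - by apply: sum_closed; [exact: rmulS0|exact: rmulSD|] => C /InP; apply: dC.
  - by rewrite -opprB; apply: rmulSN.
rewrite -(Hbe be bemor Match ord0) /= beE.
rewrite big_seq [in RHS]big_seq; apply: eq_bigr => C HC.
exact: (F5 x y v hB (CS C HC) hD).
Qed.

End Func.
Lemma sum_sub_half (V : zmodType) (T : eqType) (s t : seq T) (F : T -> V) :
  (forall x, x \in s -> x \notin t -> F x = 0) ->
  \sum_(x <- s) F x = \sum_(x <- [seq y <- s | y \in t]) F x.
Proof.
move=> H1; rewrite big_filter [in RHS]big_mkcond /=; apply: eq_big_seq => x xs.
by case: ifP => // /negbT nt; rewrite H1.
Qed.

Lemma sum_sub_eq (V : zmodType) (T : eqType) (s t : seq T) (F : T -> V) :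
  uniq s -> uniq t -> (forall x, x \in s -> x \notin t -> F x = 0) ->
  (forall x, x \in t -> x \notin s -> F x = 0) ->
  \sum_(x <- s) F x = \sum_(x <- t) F x.
Proof.
move=> us ut H1 H2; rewrite (sum_sub_half H1) (sum_sub_half H2).
apply: perm_big; apply: uniq_perm; rewrite ?filter_uniq // => x.
by rewrite !mem_filter andbC.
Qed.

Section HF.
Variables (k : fieldType) (A : algType k) (G : set A) (sim : set A -> set A -> Prop).
Variable (Fo : set (set A) -> lmodType k).
Local Unset Implicit Arguments.
Variable (Fm : forall B C : set (set A), mor A -> Fo B -> Fo C).
Local Set Implicit Arguments.
Hypothesis hG : subalgebra G.
Hypothesis hsim : equiv_on_cfs G sim.
Hypothesis hstrong : strong_HC_block_subalg G sim.
Hypothesis hF : profinite_module G sim Fm.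

Notation cls := (is_class G sim).
Notation W := (Wset G).
Notation carrier := (HF_carrier G sim (Fo:=Fo)).

Lemma dfun_addE (f g : dfun Fo) B : (f + g) B = f B + g B. Proof. by []. Qed.
Lemma dfun_scaleE c (f : dfun Fo) B : (c *: f) B = c *: f B. Proof. by []. Qed.
Lemma dfun_oppE (f : dfun Fo) B : (- f) B = - f B. Proof. by []. Qed.
Lemma dfun0E B : (0 : dfun Fo) B = 0. Proof. by []. Qed.
Lemma dfun_sumE (T : Type) (s : seq T) (F : T -> dfun Fo) B :
  (\sum_(t <- s) F t) B = \sum_(t <- s) F t B.
Proof.
elim: s => [|t s IH]; first by rewrite !big_nil.
by rewrite !big_cons dfun_addE IH.
Qed.

Definition suppL (f : dfun Fo) : seq (set (set A)) :=
  match pselect (exists s : seq (set (set A)), forall B, ~ List.In B s -> f B = 0) with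
  | left H => undup (filter (fun B => f B != 0) (proj1_sig (cid H)))
  | right _ => [::] end.

Lemma suppL_uniq f : uniq (suppL f).
Proof. by rewrite /suppL; case: pselect => [H|H] //; apply: undup_uniq. Qed.

Lemma suppL_in f B : B \in suppL f -> f B != 0.
Proof.
rewrite /suppL; case: pselect => [H|H] //.
by rewrite mem_undup mem_filter => /andP [].
Qed.

Lemma suppL_all f B : carrier f -> f B != 0 -> B \in suppL f.
Proof.
move=> [_ Hex] nz; rewrite /suppL; case: pselect => [H|H] //.
- rewrite mem_undup mem_filter nz /=.
  case: (cid H) => s Hs /=; apply/InP.
  by case: (pselect (List.In B s)) => // nin; move: nz; rewrite Hs // eqxx.
Qed.

Lemma suppL_cls f B : carrier f -> B \in suppL f -> cls B.
Proof.
move=> [Hc _] /suppL_in nz; case: (pselect (cls B)) => // nc.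
by move: nz; rewrite Hc // eqxx.
Qed.

Lemma suppL_zero f B : carrier f -> B \notin suppL f -> f B = 0.
Proof.
move=> Hf nin; apply/eqP; case: (boolP (f B == 0)) => // nz.
by move: nin; rewrite suppL_all.
Qed.

Definition actH (a : A) (f : dfun Fo) : dfun Fo := fun C =>
  if pselect (cls C) is left _ then \sum_(B <- suppL f) Fm B C (img a) (f B) else 0.

Lemma actH_nc a f C : ~ cls C -> actH a f C = 0.
Proof. by rewrite /actH; case: pselect. Qed.

Lemma actH_c a f C : cls C -> actH a f C = \sum_(B <- suppL f) Fm B C (img a) (f B).
Proof. by rewrite /actH; case: pselect. Qed.

Lemma actH_eq a f C S : cls C -> carrier f -> uniq S ->
  (forall B, f B != 0 -> B \in S) -> (forall B, B \in S -> cls B) ->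
  actH a f C = \sum_(B <- S) Fm B C (img a) (f B).
Proof.
move=> hC Hf uS HS CS; rewrite actH_c //; apply: sum_sub_eq => //.
- exact: suppL_uniq.
- by move=> B /suppL_in /HS ->.
- move=> B BS nB; rewrite (suppL_zero Hf nB).
  exact: (Fv0 hF (CS B BS) hC (img_isMor _)).
Qed.

Lemma actH_spec a f B C : cls B -> carrier f -> (forall C, C <> B -> f C = 0) -> cls C ->
  actH a f C = Fm B C (img a) (f B).
Proof.
move=> hB Hf Hz hC; rewrite (actH_eq a (S := [:: B]) hC Hf) ?big_seq1 //.
- by move=> B'; case: (pselect (B' = B)) => [->|nB]; rewrite ?mem_seq1 ?eqxx // Hz // eqxx.
- by move=> B'; rewrite mem_seq1 => /eqP ->.
Qed.

Lemma carrierD c f g : carrier f -> carrier g -> carrier (c *: f + g).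
Proof.
move=> [Hf [sf Sf]] [Hg [sg Sg]]; split.
- by move=> B nB; rewrite dfun_addE dfun_scaleE Hf // Hg // scaler0 addr0.
- exists (sf ++ sg) => B nB; rewrite dfun_addE dfun_scaleE Sf ?Sg ?scaler0 ?addr0 //.
  + by move=> H; apply: nB; apply: inApp2; right.
  + by move=> H; apply: nB; apply: inApp2; left.
Qed.



Lemma fin_list a f (t : seq (set (set A))) : (forall B, B \in t -> cls B) ->
  exists L, forall C, cls C -> ~ List.In C L -> forall B, B \in t -> Fm B C (img a) (f B) = 0.
Proof.
elim: t => [|B t IH] Ht; first by exists [::] => C _ _ B'; rewrite in_nil.
have Ht' : forall B', B' \in t -> cls B' by move=> B' H; apply: Ht; rewrite in_cons H orbT.
case: (IH Ht') => L HL.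
case: (F_fin hG hsim hstrong hF a (f B) (Ht B (mem_head _ _))) => L1 H1.
exists (L1 ++ L) => C hC nC B'; rewrite in_cons => /orP [/eqP ->|HB'].
- by apply: H1 => // H; apply: nC; apply: inApp2; left.
- by apply: HL => // H; apply: nC; apply: inApp2; right.
Qed.

Lemma actH_carrier a f : carrier f -> carrier (actH a f).
Proof.
move=> Hf; split; first by move=> C nC; apply: actH_nc.
case: (fin_list a f (t := suppL f) (fun B HB => suppL_cls Hf HB)) => L HL.
exists L => C nC; case: (pselect (cls C)) => hC; last exact: actH_nc.
by rewrite actH_c // big1_seq // => B /andP [_ HB]; apply: HL.
Qed.

Lemma supp_cat_uniq (f : dfun Fo) (l : seq (set (set A))) (B : set (set A)) :
  f B != 0 -> B \in suppL f -> B \in undup (suppL f ++ l).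
Proof. by move=> _ H; rewrite mem_undup mem_cat H. Qed.

Lemma actH_linv a c f g : carrier f -> carrier g ->
  actH a (c *: f + g) = c *: actH a f + actH a g.
Proof.
move=> Hf Hg; have Hh := carrierD c Hf Hg.
apply: functional_extensionality_dep => C.
rewrite dfun_addE dfun_scaleE.
case: (pselect (cls C)) => hC; last by rewrite !actH_nc // scaler0 addr0.
pose S := undup (suppL (c *: f + g) ++ suppL f ++ suppL g).
have uS : uniq S by apply: undup_uniq.
have CS : forall B, B \in S -> cls B.
  move=> B; rewrite mem_undup !mem_cat => /orP [H|/orP [H|H]];
    [exact: (suppL_cls Hh H)|exact: (suppL_cls Hf H)|exact: (suppL_cls Hg H)].
have inS : forall (h : dfun Fo), carrier h -> (h = c *: f + g \/ h = f \/ h = g) ->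
    forall B, h B != 0 -> B \in S.
  move=> h Hh' Eh B nz; have := suppL_all Hh' nz; rewrite mem_undup !mem_cat.
  by case: Eh => [->|[->|->]] ->; rewrite ?orbT.
rewrite (actH_eq a (S := S) hC Hh uS (inS _ Hh (or_introl erefl)) CS).
rewrite (actH_eq a (S := S) hC Hf uS (inS _ Hf (or_intror (or_introl erefl))) CS).
rewrite (actH_eq a (S := S) hC Hg uS (inS _ Hg (or_intror (or_intror erefl))) CS).
rewrite scaler_sumr -big_split /=; rewrite big_seq [in RHS]big_seq; apply: eq_bigr => B HB.
by rewrite dfun_addE dfun_scaleE (FlinV hF _ _ _ (CS B HB) hC (img_isMor _)).
Qed.

Lemma actH_lina a b c f : carrier f -> actH (c *: a + b) f = c *: actH a f + actH b f.
Proof.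
move=> Hf; apply: functional_extensionality_dep => C.
rewrite dfun_addE dfun_scaleE.
case: (pselect (cls C)) => hC; last by rewrite !actH_nc // scaler0 addr0.
rewrite !actH_c // scaler_sumr -big_split /=; rewrite big_seq [in RHS]big_seq.
apply: eq_bigr => B HB; exact: (Fimg_lin hF a b c (f B) (suppL_cls Hf HB) hC).
Qed.

Lemma actH_one f : carrier f -> actH 1 f = f.
Proof.
move=> Hf; apply: functional_extensionality_dep => C.
case: (pselect (cls C)) => hC; last by rewrite actH_nc //; case: Hf => H _; rewrite H.
pose S := undup (C :: suppL f).
have CS : forall B, B \in S -> cls B.
  by move=> B; rewrite mem_undup in_cons => /orP [/eqP ->|H] //; exact: (suppL_cls Hf H).
rewrite (actH_eq 1 (S := S) hC Hf (undup_uniq _)) //; last first.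
  by move=> B nz; rewrite mem_undup in_cons (suppL_all Hf nz) orbT.
rewrite (bigD1_seq C) ?undup_uniq ?mem_undup ?mem_head //= (Fid hF _ hC) big1_seq ?addr0 //.
move=> B /andP [nBC HB]; apply: (F_offdiag hG hsim hF _ (CS B HB) hC); last exact: G1.
by move=> E; move: nBC; rewrite E eqxx.
Qed.

Lemma actH_mul a b f : carrier f -> actH (a * b) f = actH a (actH b f).
Proof.
move=> Hf; have Hg := actH_carrier b Hf; set g := actH b f.
apply: functional_extensionality_dep => D.
case: (pselect (cls D)) => hD; last by rewrite !actH_nc.
have Hcol : forall t : seq (set (set A)), (forall B, B \in t -> cls B) ->
    exists L, (forall C, List.In C L -> cls C) /\ forall B, B \in t ->
    forall S : seq (set (set A)), uniq S -> (forall C, C \in S -> cls C) ->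
    (forall C, List.In C L -> C \in S) ->
    Fm B D (img (a * b)) (f B) = \sum_(C <- S) Fm C D (img a) (Fm B C (img b) (f B)).
  elim => [|B t IH] Ht; first by exists [::]; split => // B'; rewrite in_nil.
  have Ht' : forall B', B' \in t -> cls B' by move=> B' H; apply: Ht; rewrite in_cons H orbT.
  case: (IH Ht') => L [CL HL].
  case: (F6 hG hsim hstrong hF b a (f B) (Ht B (mem_head _ _)) hD) => S0 [CS0 HS0].
  exists (S0 ++ L); split.
  - by move=> C HC; case: (inApp HC) => [/CS0|/CL].
  - move=> B'; rewrite in_cons => /orP [/eqP ->|HB'] S uS CS SS.
    + by apply: HS0 => // C HC; apply: SS; apply: inApp2; left.
    + by apply: HL => // C HC; apply: SS; apply: inApp2; right.
case: (Hcol (suppL f) (fun B HB => suppL_cls Hf HB)) => L [CL HL].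
pose S := undup (L ++ suppL g).
have uS : uniq S by apply: undup_uniq.
have CS : forall C, C \in S -> cls C.
  move=> C; rewrite mem_undup mem_cat => /orP [/InP H|H]; [exact: CL|exact: (suppL_cls Hg H)].
have LS : forall C, List.In C L -> C \in S by move=> C /InP H; rewrite mem_undup mem_cat H.
have gS : forall C, g C != 0 -> C \in S.
  by move=> C nz; rewrite mem_undup mem_cat (suppL_all Hg nz) orbT.
rewrite actH_c // (actH_eq a (S := S) hD Hg uS gS CS).
rewrite big_seq (eq_bigr (fun B => \sum_(C <- S) Fm C D (img a) (Fm B C (img b) (f B))));
  last by move=> B HB; apply: HL.
rewrite -big_seq exchange_big /=; apply: eq_big_seq => C CinS.
have hC := CS C CinS.
rewrite /g actH_c //.
by rewrite (Fv_sum hF (suppL f) (fun B => Fm B C (img b) (f B)) hC hD (img_isMor _)).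
Qed.

Lemma conc f B m : cls B -> carrier f -> W B m -> (forall g, m g -> actH g f = 0) ->
  forall C, C <> B -> f C = 0.
Proof.
move=> hB Hf Wm Hk C CB.
case: (pselect (cls C)) => hC; last by case: Hf => H _; apply: H.
case: (boolP (C \in suppL f)) => HC; last exact: suppL_zero.
case: (F_kill hG hF (f C) hC) => n' [Wn' Kn'].
have [p [q [Hp Hq Epq]]] := W_comax hG hsim hB hC (fun E => CB (esym E)) Wm Wn'.
have pG : G p := W_subG hG hB Wm Hp.
rewrite -(Fid hF (f C) hC) -Epq (FimgD hF p q (f C) hC hC) (Kn' q Hq) addr0.
have E := f_equal (fun h : dfun Fo => h C) (Hk p Hp); simpl in E.
rewrite actH_c // (bigD1_seq C) ?suppL_uniq //= in E.
rewrite big1_seq ?addr0 in E => // B' /andP [nB HB'].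
apply: (F_offdiag hG hsim hF _ (suppL_cls Hf HB') hC) => // E'.
by move: nB; rewrite E' eqxx.
Qed.

Definition projH (B : set (set A)) (f : dfun Fo) : dfun Fo :=
  fun C => if C == B then f C else 0.

Lemma projH_carrier B f : cls B -> carrier f -> carrier (projH B f).
Proof.
move=> hB [Hc _]; split.
- move=> C nC; rewrite /projH; case: eqP => // E; apply: Hc => //.
- exists [:: B] => C nC; rewrite /projH; case: eqP => // E.
  by exfalso; apply: nC; rewrite E; left.
Qed.

Lemma projH_conc B f : forall C, C <> B -> projH B f C = 0.
Proof. by move=> C nC; rewrite /projH; case: eqP. Qed.

Lemma projH_B B f : projH B f B = f B.
Proof. by rewrite /projH eqxx. Qed.

Lemma H_Amod : is_Amod carrier actH.
Proof.
split.
- by move=> a v Hv; apply: actH_carrier.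
- by move=> a c v w Hv Hw; apply: actH_linv.
- by move=> a b c v Hv; apply: actH_lina.
- by move=> v Hv; apply: actH_one.
- by move=> a b v Hv; apply: actH_mul.
Qed.

Lemma H_block : block_mod G sim carrier (fun v => v = 0) actH.
Proof.
split.
- move=> f Hf.
  exists (size (suppL f)), (fun i => nth set0 (suppL f) i), (fun i => projH (nth set0 (suppL f) i) f).
  have hBs : forall i : 'I_(size (suppL f)), cls (nth set0 (suppL f) i).
    by move=> i; apply: (suppL_cls Hf); apply: mem_nth.
  split => //.
  + move=> i j E; apply: val_inj => /=; apply/eqP.
    by rewrite -(nth_uniq set0 (ltn_ord i) (ltn_ord j) (suppL_uniq f)); apply/eqP.
  + move=> i; set B := nth set0 (suppL f) i; have hB : cls B := hBs i.
    have Hp := projH_carrier hB Hf.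
    split => //; case: (F_kill hG hF (f B) hB) => m [Wm Km]; exists m; split => // g Hg.
    apply: functional_extensionality_dep => C; rewrite dfun0E.
    case: (pselect (cls C)) => hC; last exact: actH_nc.
    rewrite (actH_spec g hB Hp (projH_conc (B:=B) f) hC) projH_B.
    case: (pselect (C = B)) => [->|nC]; first exact: Km.
    apply: (F_offdiag hG hsim hF _ hB hC) => //; first by move=> E; apply: nC.
    exact: (W_subG hG hB Wm Hg).
  + apply: functional_extensionality_dep => C.
    rewrite dfun_addE dfun_oppE dfun_sumE dfun0E.
    rewrite (sum_nth set0 (suppL f) (fun B => projH B f C)) /projH.
    case: (boolP (C \in suppL f)) => HC.
    * by rewrite (sum_pick _ (suppL_uniq f) HC) subrr.
    * rewrite big1_seq ?subr0; first exact: suppL_zero.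
      move=> B /andP [_ HB]; case: eqP => // E; by move: HC; rewrite E HB.
- move=> n Bs vs Hc Hinj Hp Hsum i.
  have cj : forall j C, C <> Bs j -> vs j C = 0.
    move=> j; case: (Hp j) => Hcar [m [Wm Km]]; exact: (conc (Hc j) Hcar Wm Km).
  apply: functional_extensionality_dep => C; rewrite dfun0E.
  case: (pselect (C = Bs i)) => [->|nC]; last exact: cj.
  have := f_equal (fun h : dfun Fo => h (Bs i)) Hsum; rewrite /= dfun_sumE dfun0E.
  rewrite (bigD1 i) //= big1 ?addr0 // => j nji; apply: cj => E.
  by move: nji; rewrite (Hinj _ _ E) eqxx.
Qed.

Lemma H_strong : discrete_module G sim Fm ->
  strong_block_mod G sim carrier (fun v => v = 0) actH.
Proof.
move=> hdisc; split; first exact: H_block.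
move=> B hB; case: (F_kill_disc hG hF hdisc hB) => m [Wm Km]; exists m; split => //.
move=> v [Hv [m' [Wm' Km']]] g Hg.
have cv := conc hB Hv Wm' Km'.
apply: functional_extensionality_dep => C; rewrite dfun0E.
case: (pselect (cls C)) => hC; last exact: actH_nc.
rewrite (actH_spec g hB Hv cv hC).
case: (pselect (C = B)) => [->|nC]; first exact: Km.
apply: (F_offdiag hG hsim hF _ hB hC) => //; first by move=> E; apply: nC.
exact: (W_subG hG hB Wm Hg).
Qed.

End HF.

Theorem mainTheorem13 (k : fieldType) (A : algType k) (G : set A)
    (sim : set A -> set A -> Prop)
    (Fo : set (set A) -> lmodType k)
    (Fm : forall B C : set (set A), mor A -> Fo B -> Fo C) :
  subalgebra G ->
  equiv_on_cfs G sim ->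
  strong_HC_block_subalg G sim ->
  profinite_module G sim Fm ->
  (* for a in A and v in F(B), F_{B,C}((a)) v is nonzero for finitely many C *)
  (forall (a : A) (B : set (set A)) (v : Fo B), is_class G sim B ->
     exists s : seq (set (set A)), forall C, is_class G sim C ->
       ~ List.In C s -> Fm B C (img a) v = 0) /\
  (* H(F) = (+)_B F(B), with a.v = sum_C F_{B,C}((a)) v for v in F(B),
     is a Harish-Chandra block module, and a strong one if F is discrete *)
  (exists act : A -> dfun Fo -> dfun Fo,
     (forall (a : A) (B : set (set A)) (f : dfun Fo),
        is_class G sim B -> HF_carrier G sim (Fo:=Fo) f ->
        (forall C, C <> B -> f C = 0) ->
        forall C, is_class G sim C -> act a f C = Fm B C (img a) (f B)) /\
     HC_block_mod G sim (HF_carrier G sim (Fo:=Fo)) act /\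
     (discrete_module G sim Fm -> strong_HC_block_mod G sim (HF_carrier G sim (Fo:=Fo)) act)).
Proof.
move=> hG hsim hstrong hF; split.
- move=> a B v hB; exact: (F_fin hG hsim hstrong hF a v hB).
- exists (actH G sim Fm); split.
  + move=> a B f hB Hf Hz C hC; exact: (actH_spec hF a hB Hf Hz hC).
  + split.
    * split; [exact: (H_Amod hG hsim hstrong hF)|exact: (H_block hG hsim hF)].
    * move=> hdisc; split; [exact: (H_Amod hG hsim hstrong hF)|exact: (H_strong hG hsim hF hdisc)].
Qed.
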